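(* Let $\mathcal{F}=(\mu_n,\mathcal{S}_n,K_n,\pi_n)_{n\ge1}$ be a family of irreducible, reversible discrete-time finite Markov chains. Assume that $T_{n,2}(\mu_n,\epsilon_0)\to\infty$ for some $\epsilon_0>0$ or $\tau_n(c)\to\infty$ for some $c>0$, and that $\pi_n(|\mu_nK_n/\pi_n|^2)\to\infty$. Then the following are equivalent: (1) $\mathcal{F}$ has an $L^2$-cutoff; (2) for all $\epsilon,c>0$, $T_{n,2}(\mu_n,\epsilon)\lambda_{n,j_n(c)}\to\infty$; (3) there is $\epsilon>0$ with $T_{n,2}(\mu_n,\epsilon)\lambda_{n,j_n(c)}\to\infty$ for all $c>0$; (4) for all $c>0$, $\tau_n(c)\lambda_{n,j_n(c)}\to\infty$; (5) for all $\tilde c,c>0$, $\tau_n(\tilde c)\lambda_{n,j_n(c)}\to\infty$; (6) there is $\tilde c>0$ with $\tau_n(\tilde c)\lambda_{n,j_n(c)}\to\infty$ for all $c>0$. Moreover, if $\mathcal{F}$ has an $L^2$-cutoff, then $\tau_n(c)$ is an $L^2$-cutoff time for every $c>0$, and \[|T_{n,2}(\mu_n,\epsilon)-T_{n,2}(\mu_n,\delta)|=O\big(\max\{1,1/\lambda_{n,j_n(c)}\}\big)\ \ \forall\epsilon,\delta,c>0,\] \[|T_{n,2}(\mu_n,\epsilon)-\tau_n(c)|=O\big(\max\{1,\sqrt{\tau_n(c)/\lambda_{n,j_n(c)}}\}\big)\ \ \forall\epsilon,c>0.\]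
   Context: For the $n$th chain, $d_{n,2}(\mu_n,m)=\big(\sum_y|\mu_nK_n^m(y)/\pi_n(y)-1|^2\pi_n(y)\big)^{1/2}$ for integers $m\ge0$, $T_{n,2}(\mu_n,\epsilon)=\min\{m\in\mathbb{Z}_{\ge0}:d_{n,2}(\mu_n,m)\le\epsilon\}$, $\pi_n(|\mu_nK_n/\pi_n|^2)=\sum_y(\mu_nK_n(y))^2/\pi_n(y)$. Let $1=\beta_{n,0},\beta_{n,1},\dots,\beta_{n,|\mathcal{S}_n|-1}$ be the eigenvalues of $K_n$ with $|\beta_{n,1}|\ge|\beta_{n,2}|\ge\cdots$ and $L^2(\pi_n)$-orthonormal right eigenvectors $\phi_{n,0}=\mathbf 1,\phi_{n,1},\dots$; set $\lambda_{n,i}=-\log|\beta_{n,i}|$ (with $-\log0=\infty$, $1/\infty=0$); $\mu_n(\phi)=\sum_x\mu_n(x)\phi(x)$. For $c>0$: $j_n(c)=\min\{j\ge1:\sum_{i=1}^j|\mu_n(\phi_{n,i})|^2>c\}$ and $\tau_n(c)=\max_{j\ge j_n(c)}\frac{\log(1+\sum_{i=1}^j|\mu_n(\phi_{n,i})|^2)}{2\lambda_{n,j}}$. $L^2$-cutoff: there is $t_n>0$ with $d_{n,2}(\mu_n,\lceil(1+a)t_n\rceil)\to0$ and $d_{n,2}(\mu_n,\lfloor(1-a)t_n\rfloor)\to\infty$ for all $a\in(0,1)$; $t_n$ is a cutoff time. $a_n=O(b_n)$ means $\sup_na_n/b_n<\infty$. *)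

(* Defs.v *)
From Stdlib Require Import Reals ClassicalEpsilon.
Open Scope R_scope.

(** Finite sums: rsum k f = f 0 + ... + f (k-1). States of a chain with
    |S| = N are encoded as the naturals 0 .. N-1. *)
Fixpoint rsum (k : nat) (f : nat -> R) : R :=
  match k with O => 0 | S k' => rsum k' f + f k' end.

(** Extended nonnegative reals [0, +oo] (values of T_{n,2}, lambda_{n,i}, tau_n). *)
Inductive ER := Fin (r : R) | PInf.

Definition ER_max (a b : ER) : ER :=
  match a, b with Fin x, Fin y => Fin (Rmax x y) | _, _ => PInf end.

(** product on [0,+oo] with the convention 0 * oo = 0 *)
Definition ER_mul (a b : ER) : ER :=
  match a, b with
  | Fin x, Fin y => Fin (x * y)
  | Fin x, PInf => if Req_dec_T x 0 then Fin 0 else PInf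
  | PInf, Fin y => if Req_dec_T y 0 then Fin 0 else PInf
  | PInf, PInf => PInf
  end.

Definition ER_ge (a : ER) (M : R) : Prop :=
  match a with Fin x => M <= x | PInf => True end.

Definition ER_tends_infty (u : nat -> ER) : Prop :=
  forall M : R, exists N0 : nat, forall n : nat, (N0 <= n)%nat -> ER_ge (u n) M.

Definition ER_inv (a : ER) : R := match a with Fin x => / x | PInf => 0 end.

Fixpoint ER_bigmax (count : nat) (f : nat -> ER) : ER :=
  match count with O => Fin 0 | S k => ER_max (ER_bigmax k f) (f k) end.

Definition nat_floor (x : R) : nat := Z.to_nat (up x - 1).
Definition nat_ceil (x : R) : nat := Z.to_nat (1 - up (- x)).

Section Chain.
Variables (N : nat) (K : nat -> nat -> R) (pi mu : nat -> R).

Definition prob_dist (p : nat -> R) : Prop :=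
  (forall x, (x < N)%nat -> 0 <= p x) /\ rsum N p = 1.

Definition stochastic : Prop :=
  (forall x y, (x < N)%nat -> (y < N)%nat -> 0 <= K x y) /\
  (forall x, (x < N)%nat -> rsum N (fun y => K x y) = 1).

Fixpoint Kpow (m : nat) (x y : nat) : R :=
  match m with
  | O => if Nat.eqb x y then 1 else 0
  | S m' => rsum N (fun z => Kpow m' x z * K z y)
  end.

Definition irreducible : Prop :=
  forall x y, (x < N)%nat -> (y < N)%nat -> exists m, 0 < Kpow m x y.

Definition stationary : Prop :=
  forall y, (y < N)%nat -> rsum N (fun x => pi x * K x y) = pi y.

Definition reversible : Prop :=
  forall x y, (x < N)%nat -> (y < N)%nat -> pi x * K x y = pi y * K y x.

Definition irred_rev_chain : Prop :=
  (0 < N)%nat /\ stochastic /\ prob_dist pi /\ stationary /\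
  irreducible /\ reversible /\ prob_dist mu.

Definition spectral_decomp (beta : nat -> R) (phi : nat -> nat -> R) : Prop :=
  beta 0%nat = 1 /\
  (forall x, (x < N)%nat -> phi 0%nat x = 1) /\
  (forall i x, (i < N)%nat -> (x < N)%nat ->
      rsum N (fun y => K x y * phi i y) = beta i * phi i x) /\
  (forall i j, (i < N)%nat -> (j < N)%nat ->
      rsum N (fun x => phi i x * phi j x * pi x) = if Nat.eqb i j then 1 else 0) /\
  (forall i j, (1 <= i)%nat -> (i <= j)%nat -> (j < N)%nat ->
      Rabs (beta j) <= Rabs (beta i)).

Definition muKm (m y : nat) : R := rsum N (fun x => mu x * Kpow m x y).

Definition L2dist (m : nat) : R :=
  sqrt (rsum N (fun y => (muKm m y / pi y - 1) ^ 2 * pi y)).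

Definition T2 (eps : R) : ER :=
  match excluded_middle_informative (exists m, L2dist m <= eps) with
  | left _ => Fin (INR (epsilon (inhabits 0%nat)
                 (fun m => L2dist m <= eps /\ forall k, L2dist k <= eps -> (m <= k)%nat)))
  | right _ => PInf
  end.

Definition pi_norm2_muK : R := rsum N (fun y => (muKm 1 y) ^ 2 / pi y).

Variables (beta : nat -> R) (phi : nat -> nat -> R).

Definition mu_phi (i : nat) : R := rsum N (fun x => mu x * phi i x).

(** sum_{i=1}^j |mu(phi_i)|^2 *)
Definition Ssum (j : nat) : R := rsum j (fun i => (mu_phi (S i)) ^ 2).

Definition lam (i : nat) : ER :=
  if Req_dec_T (beta i) 0 then PInf else Fin (- ln (Rabs (beta i))).

(** j(c) = min {1 <= j <= N-1 : Ssum j > c}; (junk value 0 if no such j) *)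
Fixpoint jsearch (c : R) (fuel j : nat) : nat :=
  match fuel with
  | O => 0%nat
  | S f => if Rlt_dec c (Ssum j) then j else jsearch c f (S j)
  end.
Definition jn (c : R) : nat := jsearch c (N - 1) 1.

(** log(1 + Ssum j) / (2 lambda_j), with 1/oo = 0 and 1/0 = oo *)
Definition tau_term (j : nat) : ER :=
  match lam j with
  | PInf => Fin 0
  | Fin l => if Req_dec_T l 0 then PInf else Fin (ln (1 + Ssum j) / (2 * l))
  end.

Definition tau (c : R) : ER :=
  ER_bigmax (N - jn c) (fun k => tau_term (jn c + k)).

End Chain.

(** t is an L^2-cutoff time for the family with distances d n m = d_{n,2}(mu_n, m) *)
Definition L2_cutoff_time (d : nat -> nat -> R) (t : nat -> R) : Prop :=
  (forall n, 0 < t n) /\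
  forall a, 0 < a < 1 ->
    Un_cv (fun n => d n (nat_ceil ((1 + a) * t n))) 0 /\
    cv_infty (fun n => d n (nat_floor ((1 - a) * t n))).

Definition has_L2_cutoff (d : nat -> nat -> R) : Prop :=
  exists t, L2_cutoff_time d t.

(* Main.v *)
Require Import Defs.
From Stdlib Require Import Reals Lra Lia ZArith Classical ClassicalEpsilon Wf_nat.
From mathcomp Require all_boot all_algebra Rstruct.
Open Scope R_scope.

Module MC.
Import all_boot all_algebra Rstruct.
Import GRing.Theory.
Local Open Scope ring_scope.

Lemma rsum_big (k : nat) (f : nat -> R) : rsum k f = (\sum_(i < k) f i)%R.
Proof.
elim: k => [|k IH] /=; first by rewrite big_ord0.
by rewrite big_ord_recr /= IH.
Qed.

Lemma compl (N:nat) (A: nat->nat->R) (p: nat->R) :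
  (forall i j, lt i N -> lt j N ->
     rsum N (fun x => A i x * A j x * p x)%R = if Nat.eqb i j then 1%R else 0%R) ->
  forall x y, lt x N -> lt y N ->
     rsum N (fun i => A i x * A i y * p x)%R = if Nat.eqb x y then 1%R else 0%R.
Proof.
move=> H x y /ltP hx /ltP hy.
pose B : 'M[R]_N := \matrix_(i < N, z < N) A i z.
pose C : 'M[R]_N := \matrix_(z < N, j < N) (A j z * p z)%R.
have BC : (B *m C)%R = 1%:M%R.
  apply/matrixP => i j; rewrite !mxE.
  under eq_bigr => z _ do rewrite !mxE.
  have := H i j (ltP (ltn_ord i)) (ltP (ltn_ord j)).
  rewrite rsum_big => E.
  rewrite (_ : \sum_(z < N) _ = \sum_(z < N) (A i z * A j z * p z)); last first.
    by apply: eq_bigr => z _; rewrite mulrA.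
  rewrite E.
  case: (eqVneq i j) => [->|ne].
    by rewrite Nat.eqb_refl.
  have: Nat.eqb i j = false.
    apply/negP => /PeanoNat.Nat.eqb_spec e; move: ne; rewrite -(inj_eq val_inj) /= e eqxx //.
  by move=> ->.
have CB := mulmx1C BC.
move/matrixP: CB => /(_ (Ordinal hx) (Ordinal hy)).
rewrite !mxE.
under eq_bigr => z _ do rewrite !mxE.
rewrite rsum_big.
move=> E.
have -> : (\sum_(i < N) (A i x * A i y * p x))%R = (\sum_(i < N) (A i x * p x * A i y))%R.
  by apply: eq_bigr => i _; rewrite -mulrA (mulrC (A i y)) mulrA.
rewrite E /=.
case: (eqVneq x y) => [e|ne].
  subst y; rewrite Nat.eqb_refl (_ : Ordinal hx == Ordinal hy) //.
  by apply/eqP; apply: val_inj.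
rewrite (negbTE (_ : Ordinal hx != Ordinal hy)); last by [].
have: Nat.eqb x y = false by apply/negP => /PeanoNat.Nat.eqb_spec e; move: ne; rewrite e eqxx.
by move=> ->.
Qed.
End MC.

Lemma rsum_ext k f g : (forall i, (i < k)%nat -> f i = g i) -> rsum k f = rsum k g.
Proof. induction k; simpl; intros H; auto. rewrite IHk by (intros; apply H; lia). rewrite H by lia. auto. Qed.

Lemma rsum_plus k f g : rsum k (fun i => f i + g i) = rsum k f + rsum k g.
Proof. induction k; simpl; [lra|]. rewrite IHk. lra. Qed.

Lemma rsum_minus k f g : rsum k (fun i => f i - g i) = rsum k f - rsum k g.
Proof. induction k; simpl; [lra|]. rewrite IHk. lra. Qed.

Lemma rsum_scal_l k c f : rsum k (fun i => c * f i) = c * rsum k f.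
Proof. induction k; simpl; [lra|]. rewrite IHk. lra. Qed.

Lemma rsum_scal_r k c f : rsum k (fun i => f i * c) = rsum k f * c.
Proof. induction k; simpl; [lra|]. rewrite IHk. lra. Qed.

Lemma rsum_0 k : rsum k (fun _ => 0) = 0.
Proof. induction k; simpl; lra. Qed.

Lemma rsum_swap a b (f : nat -> nat -> R) :
  rsum a (fun i => rsum b (fun j => f i j)) = rsum b (fun j => rsum a (fun i => f i j)).
Proof.
induction a; simpl. { rewrite rsum_0; auto. }
rewrite IHa. rewrite <- rsum_plus. auto.
Qed.

Lemma rsum_delta_l k x g : (x < k)%nat ->
  rsum k (fun y => (if Nat.eqb x y then 1 else 0) * g y) = g x.
Proof.
induction k; intros H; simpl. lia.
destruct (Nat.eq_dec x k).
- subst. rewrite Nat.eqb_refl.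
  rewrite (rsum_ext _ _ (fun _ => 0)). rewrite rsum_0. lra.
  intros i Hi. destruct (Nat.eqb_spec k i). lia. lra.
- rewrite IHk by lia. destruct (Nat.eqb_spec x k). lia. lra.
Qed.

Lemma rsum_delta_r k x g : (x < k)%nat ->
  rsum k (fun y => g y * (if Nat.eqb y x then 1 else 0)) = g x.
Proof.
intros H. rewrite <- (rsum_delta_l k x g H). apply rsum_ext. intros i _.
rewrite Nat.eqb_sym. lra.
Qed.

Lemma rsum_shift k f : rsum (S k) f = f 0%nat + rsum k (fun i => f (S i)).
Proof. induction k; simpl in *; [lra|]. rewrite IHk. lra. Qed.

Lemma rsum_nonneg k f : (forall i, (i < k)%nat -> 0 <= f i) -> 0 <= rsum k f.
Proof. induction k; simpl; intros; [lra|]. assert (0 <= f k) by (apply H; lia).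
assert (0 <= rsum k f) by (apply IHk; intros; apply H; lia). lra. Qed.

Lemma rsum_le k f g : (forall i, (i < k)%nat -> f i <= g i) -> rsum k f <= rsum k g.
Proof. induction k; simpl; intros; [lra|]. assert (f k <= g k) by (apply H; lia).
assert (rsum k f <= rsum k g) by (apply IHk; intros; apply H; lia). lra. Qed.

Lemma rsum_sq k f : (rsum k f)^2 = rsum k (fun i => rsum k (fun j => f i * f j)).
Proof.
replace ((rsum k f)^2) with (rsum k f * rsum k f) by ring.
rewrite <- rsum_scal_r. apply rsum_ext. intros i _. rewrite <- rsum_scal_l. auto.
Qed.

Lemma rsum_mono k1 k2 f : (k1 <= k2)%nat -> (forall i, 0 <= f i) -> rsum k1 f <= rsum k2 f.
Proof.
intros H Hf. induction H. lra. simpl. specialize (Hf m). lra.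
Qed.

Lemma rsum_split a b f : (a <= b)%nat ->
  rsum b f = rsum a f + rsum (b - a) (fun i => f (a + i)%nat).
Proof.
intros H. induction H. replace (a - a)%nat with 0%nat by lia. simpl. lra.
replace (S m - a)%nat with (S (m - a)) by lia. simpl. rewrite IHle.
replace (a + (m - a))%nat with m by lia. lra.
Qed.

Lemma rsum_shift' k f : (0 < k)%nat -> rsum k f = f 0%nat + rsum (k - 1) (fun i => f (S i)).
Proof. intros H. destruct k. lia. rewrite rsum_shift. replace (S k - 1)%nat with k by lia. auto. Qed.

Lemma INR_Z2N z : (0 <= z)%Z -> INR (Z.to_nat z) = IZR z.
Proof. intros H. rewrite INR_IZR_INZ. rewrite Z2Nat.id by auto. auto. Qed.

Lemma nat_ceil_spec x : 0 <= x -> x <= INR (nat_ceil x) < x + 1.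
Proof.
intros Hx. unfold nat_ceil. destruct (archimed (-x)) as [H1 H2].
assert (Hz : (0 <= 1 - up (- x))%Z).
{ assert (IZR (up (-x)) <= 1) by lra. apply le_IZR in H. lia. }
rewrite INR_Z2N by auto. rewrite minus_IZR. simpl. lra.
Qed.

Lemma nat_floor_spec x : 0 <= x -> x - 1 < INR (nat_floor x) <= x.
Proof.
intros Hx. unfold nat_floor. destruct (archimed x) as [H1 H2].
assert (Hz : (0 <= up x - 1)%Z).
{ assert (0 < IZR (up x)) by lra. apply lt_IZR in H. lia. }
rewrite INR_Z2N by auto. rewrite minus_IZR. simpl. lra.
Qed.

Lemma exp_ge_x x : x <= exp x.
Proof. pose proof (exp_ineq1_le x). lra. Qed.

Definition ER_le (a b : ER) : Prop :=
  match a, b with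
  | Fin x, Fin y => x <= y
  | _, PInf => True
  | PInf, Fin _ => False
  end.

Lemma ER_bigmax_ge cnt f k : (k < cnt)%nat -> ER_le (f k) (ER_bigmax cnt f).
Proof.
induction cnt; intros H. lia. simpl.
destruct (Nat.eq_dec k cnt).
- subst. destruct (ER_bigmax cnt f), (f cnt); simpl; auto. apply Rmax_r.
- specialize (IHcnt ltac:(lia)). destruct (ER_bigmax cnt f), (f k), (f cnt); simpl in *; auto.
  all: try (eapply Rle_trans; [apply IHcnt| apply Rmax_l]).
Qed.

Lemma ER_bigmax_ge0 cnt f : ER_le (Fin 0) (ER_bigmax cnt f).
Proof.
induction cnt; simpl. lra. destruct (ER_bigmax cnt f), (f cnt); simpl in *; auto.
eapply Rle_trans; [apply IHcnt| apply Rmax_l].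
Qed.

Lemma ER_bigmax_le cnt f X : ER_le (Fin 0) X -> (forall k, (k < cnt)%nat -> ER_le (f k) X) ->
  ER_le (ER_bigmax cnt f) X.
Proof.
induction cnt; intros H0 H; simpl. auto.
specialize (IHcnt H0 ltac:(intros; apply H; lia)). specialize (H cnt ltac:(lia)).
destruct (ER_bigmax cnt f), (f cnt), X; simpl in *; auto. apply Rmax_lub; auto.
Qed.

Lemma ER_bigmax_attain_fin cnt f t : ER_bigmax cnt f = Fin t -> 0 < t ->
  exists k, (k < cnt)%nat /\ f k = Fin t.
Proof.
induction cnt; simpl; intros H Ht. inversion H; lra.
destruct (ER_bigmax cnt f) eqn:E1, (f cnt) eqn:E2; simpl in *; try discriminate.
assert (H1 : Rmax r r0 = t) by congruence. clear H. unfold Rmax in H1. destruct (Rle_dec r r0).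
- exists cnt. split; auto. rewrite E2; congruence.
- destruct (IHcnt ltac:(congruence) Ht) as [k [Hk Hf]]. exists k; split; auto.
Qed.

Lemma ER_bigmax_attain_inf cnt f : ER_bigmax cnt f = PInf -> exists k, (k < cnt)%nat /\ f k = PInf.
Proof.
induction cnt; simpl; intros H. discriminate.
destruct (ER_bigmax cnt f) eqn:E1, (f cnt) eqn:E2; simpl in *; try discriminate.
- exists cnt; auto.
- destruct IHcnt as [k [Hk Hf]]; auto. exists k; split; auto.
- exists cnt; auto.
Qed.

Lemma ER_le_trans a b c : ER_le a b -> ER_le b c -> ER_le a c.
Proof. destruct a, b, c; simpl; auto; try lra; tauto. Qed.

Definition ev (P : nat -> Prop) : Prop := exists N0, forall n, (N0 <= n)%nat -> P n.

Lemma ev_and P Q : ev P -> ev Q -> ev (fun n => P n /\ Q n).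
Proof. intros [a Ha] [b Hb]. exists (max a b). intros n Hn. split; [apply Ha|apply Hb]; lia. Qed.

Lemma ev_mono (P Q : nat -> Prop) : ev P -> (forall n, P n -> Q n) -> ev Q.
Proof. intros [a Ha] H. exists a. intros; auto. Qed.

Lemma ev_true : ev (fun _ => True).
Proof. exists 0%nat; auto. Qed.

Lemma exp_le_exp x y : x <= y -> exp x <= exp y.
Proof. intros H. destruct (Req_dec x y). subst; lra. apply Rlt_le, exp_increasing; lra. Qed.

Lemma ln_le x y : 0 < x -> x <= y -> ln x <= ln y.
Proof. intros H H'. destruct (Req_dec x y). subst; lra. apply Rlt_le, ln_increasing; lra. Qed.

Definition Dm N (mu : nat -> R) beta phi (m : nat) : R :=
  rsum (N - 1) (fun i => (mu_phi N mu phi (S i))^2 * (beta (S i))^(2*m)).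

Section Spec.
Variables (N : nat) (K : nat -> nat -> R) (pi mu beta : nat -> R) (phi : nat -> nat -> R).
Hypothesis HC : irred_rev_chain N K pi mu.
Hypothesis HS : spectral_decomp N K pi beta phi.

Lemma compl_phi : forall x y, (x < N)%nat -> (y < N)%nat ->
  rsum N (fun i => phi i x * phi i y * pi x) = if Nat.eqb x y then 1 else 0.
Proof.
destruct HS as (_ & _ & _ & Horth & _).
apply MC.compl. intros; apply Horth; auto.
Qed.

Lemma pi_pos : forall x, (x < N)%nat -> 0 < pi x.
Proof.
intros x Hx. destruct HC as (_ & _ & (Hpi & _) & _).
pose proof (compl_phi x x Hx Hx) as E. rewrite Nat.eqb_refl in E.
rewrite rsum_scal_r in E. specialize (Hpi x Hx).
destruct (Req_dec (pi x) 0) as [e|e]. rewrite e in E. lra. lra.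
Qed.

Lemma eig_pow : forall m i x, (i < N)%nat -> (x < N)%nat ->
  rsum N (fun y => Kpow N K m x y * phi i y) = beta i ^ m * phi i x.
Proof.
destruct HS as (_ & _ & Heig & _).
induction m; intros i x Hi Hx; simpl.
- rewrite rsum_delta_l by auto. lra.
- transitivity (rsum N (fun z => Kpow N K m x z * rsum N (fun y => K z y * phi i y))).
  + rewrite (rsum_ext N (fun y => rsum N (fun z => Kpow N K m x z * K z y) * phi i y)
      (fun y => rsum N (fun z => Kpow N K m x z * K z y * phi i y))).
    2:{ intros; rewrite <- rsum_scal_r; auto. }
    rewrite rsum_swap. apply rsum_ext. intros z Hz. rewrite <- rsum_scal_l.
    apply rsum_ext. intros; ring.
  + rewrite (rsum_ext N _ (fun z => beta i * (Kpow N K m x z * phi i z))).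
    2:{ intros z Hz. rewrite Heig by auto. ring. }
    rewrite rsum_scal_l. rewrite IHm by auto. ring.
Qed.

Lemma Kpow_expand : forall m x y, (x < N)%nat -> (y < N)%nat ->
  Kpow N K m x y = pi y * rsum N (fun i => beta i ^ m * phi i x * phi i y).
Proof.
intros m x y Hx Hy.
transitivity (rsum N (fun z => Kpow N K m x z * (if Nat.eqb z y then 1 else 0))).
{ rewrite rsum_delta_r by auto. auto. }
rewrite (rsum_ext N _ (fun z => Kpow N K m x z *
     rsum N (fun i => phi i y * phi i z * pi y))).
2:{ intros z Hz. rewrite compl_phi by auto. rewrite Nat.eqb_sym. auto. }
rewrite (rsum_ext N _ (fun z => rsum N (fun i => pi y * phi i y * (Kpow N K m x z * phi i z)))).
2:{ intros z Hz. rewrite <- rsum_scal_l. apply rsum_ext; intros; ring. }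
rewrite rsum_swap. rewrite <- rsum_scal_l. apply rsum_ext. intros i Hi.
rewrite rsum_scal_l. rewrite eig_pow by auto. ring.
Qed.

Lemma muKm_expand : forall m y, (y < N)%nat ->
  muKm N K mu m y = pi y * rsum N (fun i => beta i ^ m * mu_phi N mu phi i * phi i y).
Proof.
intros m y Hy. unfold muKm, mu_phi.
rewrite (rsum_ext N _ (fun x => rsum N (fun i => pi y * (mu x * (beta i ^ m * phi i x * phi i y))))).
2:{ intros x Hx. rewrite Kpow_expand by auto. rewrite !rsum_scal_l.
    rewrite <- !rsum_scal_l. apply rsum_ext; intros; ring. }
rewrite rsum_swap. rewrite <- rsum_scal_l. apply rsum_ext. intros i Hi.
rewrite rsum_scal_l. f_equal.
rewrite (rsum_ext N _ (fun x => (beta i ^m * phi i y) * (mu x * phi i x))) by (intros; ring).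
rewrite rsum_scal_l. ring.
Qed.

Lemma parseval : forall c : nat -> R,
  rsum N (fun y => (rsum N (fun i => c i * phi i y))^2 * pi y) = rsum N (fun i => (c i)^2).
Proof.
destruct HS as (_ & _ & _ & Horth & _).
intros c.
rewrite (rsum_ext N _ (fun y => rsum N (fun i => rsum N (fun j => c i * c j * (phi i y * phi j y * pi y))))).
2:{ intros y Hy. rewrite rsum_sq. rewrite <- rsum_scal_r. apply rsum_ext. intros i Hi.
    rewrite <- rsum_scal_r. apply rsum_ext. intros; ring. }
rewrite rsum_swap. apply rsum_ext. intros i Hi.
rewrite rsum_swap.
rewrite (rsum_ext N _ (fun j => c i * c j * (if Nat.eqb i j then 1 else 0))).
2:{ intros j Hj. rewrite rsum_scal_l. rewrite Horth by auto. auto. }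
rewrite (rsum_ext N _ (fun j => (c i * c j) * (if Nat.eqb j i then 1 else 0))).
2:{ intros j Hj. rewrite Nat.eqb_sym. auto. }
rewrite (rsum_delta_r N i (fun j => c i * c j)) by auto. ring.
Qed.

Lemma mu_phi0 : mu_phi N mu phi 0 = 1.
Proof.
destruct HS as (_ & Hphi0 & _). destruct HC as (_ & _ & _ & _ & _ & _ & (_ & Hmu)).
unfold mu_phi. rewrite <- Hmu. apply rsum_ext. intros x Hx. rewrite Hphi0 by auto. ring.
Qed.

Lemma Npos : (0 < N)%nat.
Proof. destruct HC; auto. Qed.

Lemma L2dist_eq : forall m, L2dist N K pi mu m = sqrt (Dm N mu beta phi m).
Proof.
intros m. unfold L2dist. f_equal.
destruct HS as (Hb0 & Hphi0 & _).
pose (c := fun i => beta i ^ m * mu_phi N mu phi i - (if Nat.eqb 0 i then 1 else 0)).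
rewrite (rsum_ext N _ (fun y => (rsum N (fun i => c i * phi i y))^2 * pi y)).
2:{ intros y Hy. f_equal. f_equal. unfold c.
    rewrite (rsum_ext N _ (fun i => beta i ^ m * mu_phi N mu phi i * phi i y -
        (if Nat.eqb 0 i then 1 else 0) * phi i y)) by (intros; ring).
    rewrite rsum_minus. rewrite rsum_delta_l by (apply Npos).
    rewrite Hphi0 by auto. rewrite muKm_expand by auto.
    pose proof (pi_pos y Hy). field. lra. }
rewrite parseval.
pose proof Npos as HN.
rewrite (rsum_shift' N) by auto. unfold Dm.
unfold c at 1. rewrite Hb0, mu_phi0. simpl Nat.eqb. rewrite pow1.
replace ((1 * 1 - 1) ^ 2) with 0 by ring. rewrite Rplus_0_l.
apply rsum_ext. intros i Hi. unfold c. replace (Nat.eqb 0 (S i)) with false by reflexivity.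
rewrite Nat.mul_comm, pow_mult. ring.
Qed.

Lemma pinorm_eq : pi_norm2_muK N K pi mu = 1 + Dm N mu beta phi 1.
Proof.
unfold pi_norm2_muK.
destruct HS as (Hb0 & Hphi0 & _).
pose (c := fun i => beta i ^ 1 * mu_phi N mu phi i).
rewrite (rsum_ext N _ (fun y => (rsum N (fun i => c i * phi i y))^2 * pi y)).
2:{ intros y Hy. rewrite muKm_expand by auto. unfold c.
    pose proof (pi_pos y Hy). field. lra. }
rewrite parseval.
pose proof Npos as HN.
rewrite (rsum_shift' N) by auto. unfold Dm.
unfold c at 1. rewrite Hb0, mu_phi0. f_equal. ring.
apply rsum_ext. intros i Hi. unfold c. replace (2*1)%nat with 2%nat by reflexivity. ring.
Qed.

Lemma beta_le1 : forall i, (i < N)%nat -> Rabs (beta i) <= 1.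
Proof.
intros i Hi.
destruct HS as (_ & _ & Heig & Horth & _).
destruct HC as (_ & (HK0 & HK1) & (Hpi & _) & Hstat & _).
assert (J : forall x, (x < N)%nat ->
  (rsum N (fun y => K x y * phi i y))^2 <= rsum N (fun y => K x y * (phi i y)^2)).
{ intros x Hx. set (a := rsum N (fun y => K x y * phi i y)).
  assert (0 <= rsum N (fun y => K x y * (phi i y - a)^2)).
  { apply rsum_nonneg. intros y Hy. apply Rmult_le_pos. apply HK0; auto. apply pow2_ge_0. }
  rewrite (rsum_ext N _ (fun y => K x y * (phi i y)^2 - 2 * a * (K x y * phi i y) + a^2 * K x y))
    in H by (intros; ring).
  rewrite rsum_plus, rsum_minus, rsum_scal_l, rsum_scal_l, HK1 in H by auto.
  fold a in H. lra. }
assert (E1 : rsum N (fun x => pi x * (rsum N (fun y => K x y * phi i y))^2) = (beta i)^2).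
{ rewrite (rsum_ext N _ (fun x => (beta i)^2 * (phi i x * phi i x * pi x))).
  2:{ intros x Hx. rewrite Heig by auto. ring. }
  rewrite rsum_scal_l. rewrite Horth by auto. rewrite Nat.eqb_refl. ring. }
assert (E2 : rsum N (fun x => pi x * rsum N (fun y => K x y * (phi i y)^2)) = 1).
{ rewrite (rsum_ext N _ (fun x => rsum N (fun y => (phi i y)^2 * (pi x * K x y)))).
  2:{ intros. rewrite <- rsum_scal_l. apply rsum_ext; intros; ring. }
  rewrite rsum_swap.
  rewrite (rsum_ext N _ (fun y => phi i y * phi i y * pi y)).
  2:{ intros y Hy. rewrite rsum_scal_l. rewrite Hstat by auto. ring. }
  rewrite Horth by auto. rewrite Nat.eqb_refl. auto. }
assert ((beta i)^2 <= 1).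
{ rewrite <- E1, <- E2. apply rsum_le. intros x Hx. apply Rmult_le_compat_l.
  apply Hpi; auto. apply J; auto. }
rewrite <- (Rabs_right 1) by lra. apply Rsqr_le_abs_0. unfold Rsqr. nra.
Qed.

End Spec.

Lemma PT p q s : 0 < s -> p <= q ->
  (exp q - exp p) * exp (- ((1 + s) * q)) <= (exp (- (s * p)) - exp (- (s * q))) / s.
Proof.
intros Hs Hpq.
assert (A : exp p >= exp q * (1 + (p - q))).
{ replace (exp p) with (exp q * exp (p - q)) by (rewrite <- exp_plus; f_equal; ring).
  pose proof (exp_ineq1_le (p - q)). pose proof (exp_pos q). nra. }
assert (B : exp (- (s * p)) >= exp (- (s * q)) * (1 + s * (q - p))).
{ replace (exp (- (s * p))) with (exp (- (s * q)) * exp (s * (q - p))) by (rewrite <- exp_plus; f_equal; ring).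
  pose proof (exp_ineq1_le (s * (q - p))). pose proof (exp_pos (- (s * q))). nra. }
assert (C : exp q * exp (- ((1 + s) * q)) = exp (- (s * q))).
{ rewrite <- exp_plus. f_equal. ring. }
pose proof (exp_pos (- ((1 + s) * q))). pose proof (exp_pos (- (s*q))).
apply Rle_trans with ((q - p) * exp (- (s * q))).
- rewrite <- C. nra.
- apply Rmult_le_reg_l with s; auto. field_simplify; nra.
Qed.

Lemma rsum_telescope k (a : nat -> R) : rsum k (fun i => a i - a (S i)) = a 0%nat - a k.
Proof. induction k; simpl; [ring|]. rewrite IHk. ring. Qed.

Section Anal.
Variables (N : nat) (mu beta : nat -> R) (phi : nat -> nat -> R).
Hypothesis Hb : forall j, (1 <= j < N)%nat -> Rabs (beta j) <= 1.
Hypothesis Hmon : forall i j, (1 <= i)%nat -> (i <= j)%nat -> (j < N)%nat -> Rabs (beta j) <= Rabs (beta i).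

Let w j := (mu_phi N mu phi j)^2.
Let Ss j := Ssum N mu phi j.
Definition term m j := (mu_phi N mu phi j)^2 * beta j ^ (2*m).
Let D m := Dm N mu beta phi m.
Definition lb j := - ln (Rabs (beta j)).

Lemma D_def m : D m = rsum (N - 1) (fun i => term m (S i)).
Proof. reflexivity. Qed.

Lemma Ss_S j : Ss (S j) = Ss j + w (S j).
Proof. reflexivity. Qed.

Lemma w_nonneg j : 0 <= w j.
Proof. apply pow2_ge_0. Qed.

Lemma Ss_mono i j : (i <= j)%nat -> Ss i <= Ss j.
Proof. intros H. induction H. lra. rewrite Ss_S. pose proof (w_nonneg (S m)). lra. Qed.

Lemma Ss_nonneg j : 0 <= Ss j.
Proof. apply (Ss_mono 0 j). lia. Qed.

Lemma Ss_add a k : Ss (a + k) = Ss a + rsum k (fun i => w (S a + i)%nat).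
Proof. induction k. simpl. rewrite Nat.add_0_r. ring.
rewrite Nat.add_succ_r, Ss_S, IHk. simpl. ring. Qed.

Lemma pow2m_eq x m : x ^ (2 * m) = (Rabs x) ^ (2 * m).
Proof. rewrite !pow_mult. f_equal. rewrite <- !Rsqr_pow2. apply Rsqr_abs. Qed.

Lemma pow2m_nonneg x m : 0 <= x ^ (2*m).
Proof. rewrite pow_mult. apply pow_le. apply pow2_ge_0. Qed.

Lemma pow2m_le_abs x y m : Rabs x <= Rabs y -> x ^ (2*m) <= y ^ (2*m).
Proof. intros H. rewrite (pow2m_eq x), (pow2m_eq y). apply pow_incr. split; auto. apply Rabs_pos. Qed.

Lemma pow2m_le1 j m : (1 <= j < N)%nat -> beta j ^ (2*m) <= 1.
Proof. intros H. rewrite <- (pow1 (2*m)). apply pow2m_le_abs. rewrite Rabs_R1. apply Hb; auto. Qed.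

Lemma term_nonneg m j : 0 <= term m j.
Proof. unfold term. apply Rmult_le_pos. apply pow2_ge_0. apply pow2m_nonneg. Qed.

Lemma pow2m_exp j m : beta j <> 0 -> beta j ^ (2*m) = exp (-2 * lb j * INR m).
Proof.
intros H. rewrite pow2m_eq. rewrite <- Rpower_pow by (apply Rabs_pos_lt; auto).
unfold Rpower, lb. f_equal. rewrite mult_INR. simpl. ring.
Qed.

Lemma lb_nonneg j : (1 <= j < N)%nat -> beta j <> 0 -> 0 <= lb j.
Proof. intros H Hn. unfold lb. pose proof (Hb j H). assert (0 < Rabs (beta j)) by (apply Rabs_pos_lt; auto).
assert (ln (Rabs (beta j)) <= ln 1). { destruct (Req_dec (Rabs (beta j)) 1). rewrite H2; lra. apply Rlt_le, ln_increasing; lra. }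
rewrite ln_1 in H2. lra. Qed.

Lemma lb_mono i j : (1 <= i)%nat -> (i <= j)%nat -> (j < N)%nat -> beta j <> 0 -> lb i <= lb j.
Proof. intros H1 H2 H3 Hn. unfold lb. pose proof (Hmon i j H1 H2 H3). assert (0 < Rabs (beta j)) by (apply Rabs_pos_lt; auto).
assert (ln (Rabs (beta j)) <= ln (Rabs (beta i))). { destruct (Req_dec (Rabs (beta j)) (Rabs (beta i))). rewrite H4; lra. apply Rlt_le, ln_increasing; lra. }
lra. Qed.

Lemma jsearch_spec c : forall fuel j, (1 <= j)%nat -> Ss (j - 1) <= c -> c < Ss (j + fuel - 1) ->
  let r := jsearch N mu phi c fuel j in (j <= r <= j + fuel - 1)%nat /\ c < Ss r /\ Ss (r - 1) <= c.
Proof.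
induction fuel; intros j Hj H1 H2; simpl.
- replace (j + 0 - 1)%nat with (j - 1)%nat in H2 by lia. lra.
- destruct (Rlt_dec c (Ssum N mu phi j)) as [h|h].
  + split. lia. split; auto.
  + assert (Ss j <= c) by (unfold Ss; lra).
    destruct (IHfuel (S j)) as (A & B & C). lia. replace (S j - 1)%nat with j by lia. auto.
    replace (S j + fuel - 1)%nat with (j + S fuel - 1)%nat by lia. auto.
    split. lia. split; auto.
Qed.

Lemma jn_spec c : 0 <= c -> c < Ss (N - 1) ->
  (1 <= jn N mu phi c <= N - 1)%nat /\ c < Ss (jn N mu phi c) /\ Ss (jn N mu phi c - 1) <= c.
Proof.
intros H0 H. unfold jn. destruct (jsearch_spec c (N - 1) 1) as (A & B & C).
lia. simpl. unfold Ss, Ssum. simpl. lra. replace (1 + (N - 1) - 1)%nat with (N - 1)%nat by lia. auto.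
split. lia. auto.
Qed.

Lemma jn_mono c c' : 0 <= c -> c <= c' -> c' < Ss (N - 1) -> (jn N mu phi c <= jn N mu phi c')%nat.
Proof.
intros H0 H1 H2. destruct (jn_spec c) as (A & B & C); try lra. destruct (jn_spec c') as (A' & B' & C'); try lra.
destruct (Nat.le_gt_cases (jn N mu phi c) (jn N mu phi c')); auto.
assert (Ss (jn N mu phi c') <= Ss (jn N mu phi c - 1)) by (apply Ss_mono; lia). lra.
Qed.

Lemma D_split m J : (1 <= J <= N)%nat ->
  D m = rsum (J - 1) (fun i => term m (S i)) + rsum (N - J) (fun i => term m (J + i)%nat).
Proof.
intros H. rewrite D_def. rewrite (rsum_split (J - 1) (N - 1)) by lia.
replace (N - 1 - (J - 1))%nat with (N - J)%nat by lia. f_equal. apply rsum_ext. intros i Hi.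
f_equal. lia.
Qed.

Lemma first_le m k : (k <= N - 1)%nat -> rsum k (fun i => term m (S i)) <= Ss k.
Proof.
intros H. unfold Ss, Ssum. apply rsum_le. intros i Hi. unfold term.
pose proof (pow2m_le1 (S i) m ltac:(lia)). pose proof (pow2_ge_0 (mu_phi N mu phi (S i))). nra.
Qed.

Lemma part_nonneg m k p : 0 <= rsum k (fun i => term m (p + i)%nat).
Proof. apply rsum_nonneg. intros; apply term_nonneg. Qed.

Lemma first_nonneg m k : 0 <= rsum k (fun i => term m (S i)).
Proof. apply rsum_nonneg. intros; apply term_nonneg. Qed.

Lemma D_nonneg m : 0 <= D m.
Proof. rewrite D_def. apply first_nonneg. Qed.

Lemma D_lower m k : (1 <= k <= N - 1)%nat -> Ss k * beta k ^ (2*m) <= D m.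
Proof.
intros H. rewrite D_def. rewrite (rsum_split k (N - 1)) by lia.
pose proof (part_nonneg m (N - 1 - k) (S k)).
rewrite (rsum_ext (N - 1 - k) _ (fun i => term m (S k + i)%nat)) by (intros; f_equal; lia).
assert (Ss k * beta k ^ (2 * m) <= rsum k (fun i => term m (S i))).
{ unfold Ss, Ssum. rewrite <- rsum_scal_r. apply rsum_le. intros i Hi. unfold term.
  apply Rmult_le_compat_l. apply pow2_ge_0. apply pow2m_le_abs. apply Hmon; lia. }
lra.
Qed.

Lemma D_mono m : D (S m) <= D m.
Proof.
rewrite !D_def. apply rsum_le. intros i Hi. unfold term.
apply Rmult_le_compat_l. apply pow2_ge_0.
replace (2 * S m)%nat with (2 + 2 * m)%nat by lia. rewrite pow_add.
pose proof (pow2m_le1 (S i) 1 ltac:(lia)). simpl in H. pose proof (pow2m_nonneg (beta (S i)) m).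
replace (beta (S i) * (beta (S i) * 1)) with (beta (S i) ^ 2) in H by ring. nra.
Qed.

Lemma D_antimono m1 m2 : (m1 <= m2)%nat -> D m2 <= D m1.
Proof. intros H. induction H. lra. pose proof (D_mono m). lra. Qed.

Lemma seg_le m p len : (1 <= p)%nat -> (p + len <= N)%nat ->
  rsum len (fun i => term m (p + i)%nat) <= (Ss (p + len - 1) - Ss (p - 1)) * beta p ^ (2*m).
Proof.
intros H1 H2. replace (p + len - 1)%nat with ((p - 1) + len)%nat by lia. rewrite Ss_add.
replace (S (p - 1)) with p by lia.
replace (Ss (p - 1) + rsum len (fun i => w (p + i)%nat) - Ss (p - 1)) with (rsum len (fun i => w (p + i)%nat)) by ring.
rewrite <- rsum_scal_r. apply rsum_le. intros i Hi. unfold term, w.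
apply Rmult_le_compat_l. apply pow2_ge_0. apply pow2m_le_abs. apply Hmon; lia.
Qed.

Lemma tau_unfold c : tau N mu beta phi c = ER_bigmax (N - jn N mu phi c) (fun k => tau_term N mu beta phi (jn N mu phi c + k)).
Proof. reflexivity. Qed.

Lemma tt_le c j : (jn N mu phi c <= j < N)%nat -> ER_le (tau_term N mu beta phi j) (tau N mu beta phi c).
Proof.
intros H. rewrite tau_unfold. replace j with (jn N mu phi c + (j - jn N mu phi c))%nat by lia.
apply (ER_bigmax_ge _ (fun k => tau_term N mu beta phi (jn N mu phi c + k))). lia.
Qed.

Lemma lam_zero j : beta j = 0 -> lam beta j = PInf.
Proof. intros H. unfold lam. destruct (Req_dec_T (beta j) 0); auto. contradiction. Qed.

Lemma lam_nz j : beta j <> 0 -> lam beta j = Fin (lb j).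
Proof. intros H. unfold lam. destruct (Req_dec_T (beta j) 0); auto. contradiction. Qed.

Lemma tt_zero j : beta j = 0 -> tau_term N mu beta phi j = Fin 0.
Proof. intros H. unfold tau_term. rewrite lam_zero; auto. Qed.

Lemma tt_inf j : beta j <> 0 -> lb j = 0 -> tau_term N mu beta phi j = PInf.
Proof. intros H H'. unfold tau_term. rewrite lam_nz by auto. destruct (Req_dec_T (lb j) 0); auto. contradiction. Qed.

Lemma tt_fin j : beta j <> 0 -> lb j <> 0 -> tau_term N mu beta phi j = Fin (ln (1 + Ss j) / (2 * lb j)).
Proof. intros H H'. unfold tau_term. rewrite lam_nz by auto. destruct (Req_dec_T (lb j) 0); auto. contradiction. Qed.

Lemma abs1_lb j : beta j <> 0 -> lb j = 0 -> Rabs (beta j) = 1.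
Proof. intros H H'. unfold lb in H'. assert (ln (Rabs (beta j)) = 0) by lra.
rewrite <- ln_1 in H0. apply ln_inv; auto. apply Rabs_pos_lt; auto. lra. Qed.

Section WithC.
Variable c : R.
Hypothesis Hc : 0 < c.
Hypothesis HcS : c < Ss (N - 1).
Let J := jn N mu phi c.

Lemma J_spec : (1 <= J <= N - 1)%nat /\ c < Ss J /\ Ss (J - 1) <= c.
Proof. apply jn_spec; lra. Qed.

Lemma tau_inf_abs1 : tau N mu beta phi c = PInf -> Rabs (beta J) = 1.
Proof.
intros H. destruct J_spec as (A & B & C). rewrite tau_unfold in H.
apply ER_bigmax_attain_inf in H. destruct H as (k & Hk & Hf).
fold J in Hk, Hf.
unfold tau_term in Hf. destruct (Req_dec (beta (J + k)) 0) as [e|e].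
- rewrite lam_zero in Hf by auto. discriminate.
- rewrite lam_nz in Hf by auto. destruct (Req_dec_T (lb (J + k)) 0) as [e2|e2]; try discriminate.
  pose proof (abs1_lb _ e e2). pose proof (Hmon J (J + k) ltac:(lia) ltac:(lia) ltac:(lia)).
  pose proof (Hb J ltac:(lia)). lra.
Qed.

Lemma abs1_D_ge : Rabs (beta J) = 1 -> forall m, c < D m.
Proof.
intros H m. destruct J_spec as (A & B & C). pose proof (D_lower m J ltac:(lia)).
rewrite pow2m_eq, H, pow1 in H0. lra.
Qed.

Lemma beta0_D_le : beta J = 0 -> forall m, (1 <= m)%nat -> D m <= c.
Proof.
intros H m Hm. destruct J_spec as (A & B & C). rewrite (D_split m J) by lia.
assert (rsum (N - J) (fun i => term m (J + i)%nat) = 0).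
{ rewrite <- (rsum_0 (N - J)). apply rsum_ext. intros i Hi. unfold term.
  assert (beta (J + i)%nat = 0).
  { pose proof (Hmon J (J + i) ltac:(lia) ltac:(lia) ltac:(lia)). rewrite H, Rabs_R0 in H0.
    pose proof (Rabs_pos (beta (J+i)%nat)). destruct (Req_dec (beta (J+i)%nat) 0); auto. pose proof (Rabs_pos_lt _ H2). lra. }
  rewrite H0. rewrite pow_i by lia. ring. }
rewrite H0. pose proof (first_le m (J - 1) ltac:(lia)). lra.
Qed.

Lemma tau_fin_nz tau0 : tau N mu beta phi c = Fin tau0 -> beta J <> 0 -> 0 < lb J /\ 0 < tau0.
Proof.
intros H Hn. destruct J_spec as (A & B & C).
pose proof (tt_le c J ltac:(unfold J; lia)). rewrite H in H0. fold J in H0.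
pose proof (lb_nonneg J ltac:(lia) Hn).
destruct (Req_dec (lb J) 0) as [e|e].
- rewrite tt_inf in H0 by auto. simpl in H0. contradiction.
- rewrite tt_fin in H0 by auto. simpl in H0.
  assert (0 < ln (1 + Ss J)). { rewrite <- ln_1. apply ln_increasing; lra. }
  split. lra. apply Rlt_le_trans with (ln (1 + Ss J) / (2 * lb J)); auto.
  apply Rdiv_lt_0_compat; lra.
Qed.

Lemma tau_fin_zero : tau N mu beta phi c = Fin 0 -> beta J = 0.
Proof. intros H. destruct (Req_dec (beta J) 0); auto. destruct (tau_fin_nz 0 H H0). lra. Qed.

Lemma tail_bound tau0 s h m : tau N mu beta phi c = Fin tau0 -> 0 < tau0 -> beta J <> 0 ->
  0 < s -> 0 <= h -> (1 + s) * tau0 + h <= INR m ->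
  rsum (N - J) (fun i => term m (J + i)%nat) <= exp (-2 * lb J * h) / s.
Proof.
intros Ht Ht0 HbJ Hs Hh Hm. destruct J_spec as (A & B & C).
set (g := fun k => exp (- (s * ln (1 + Ss k))) / s).
set (E := exp (-2 * lb J * h)).
assert (HE : 0 < E) by apply exp_pos.
assert (Hg : forall k, 0 <= g k <= 1 / s).
{ intros k. unfold g. assert (0 <= ln (1 + Ss k)).
  { rewrite <- ln_1. destruct (Req_dec (Ss k) 0). rewrite H, Rplus_0_r; lra. apply Rlt_le, ln_increasing. lra. pose proof (Ss_nonneg k); lra. }
  assert (exp (- (s * ln (1 + Ss k))) <= 1). { apply Rle_trans with (exp 0). apply exp_le_exp. pose proof (Rmult_le_pos s _ (Rlt_le _ _ Hs) H). lra. rewrite exp_0; lra. }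
  pose proof (exp_pos (- (s * ln (1 + Ss k)))). split. apply Rlt_le, Rdiv_lt_0_compat; lra.
  unfold Rdiv. apply Rmult_le_compat_r. apply Rlt_le, Rinv_0_lt_compat; lra. lra. }
assert (Hm1 : (1 <= m)%nat).
{ destruct m. simpl in Hm. nra. lia. }
assert (PTm : forall i, (i < N - J)%nat -> term m (J + i)%nat <= (g (J + i - 1)%nat - g (J + i)%nat) * E).
{ intros i Hi. set (j := (J + i)%nat).
  assert (Hj : (J <= j < N)%nat) by (unfold j; lia).
  assert (Hgm : g j <= g (j - 1)%nat).
  { unfold g. unfold Rdiv. apply Rmult_le_compat_r. apply Rlt_le, Rinv_0_lt_compat; lra.
    apply exp_le_exp. assert (ln (1 + Ss (j - 1)%nat) <= ln (1 + Ss j)).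
    { pose proof (Ss_mono (j - 1) j ltac:(lia)). pose proof (Ss_nonneg (j-1)).
      apply ln_le; lra. }
    nra. }
  destruct (Req_dec (beta j) 0) as [e|e].
  - unfold term. rewrite e. rewrite pow_i by lia. nra.
  - pose proof (tt_le c j ltac:(unfold J in Hj; lia)). rewrite Ht in H.
    pose proof (lb_mono J j ltac:(lia) ltac:(lia) ltac:(lia) e).
    pose proof (lb_nonneg J ltac:(lia) HbJ).
    destruct (Req_dec (lb j) 0) as [e2|e2].
    + rewrite tt_inf in H by auto. simpl in H. contradiction.
    + rewrite tt_fin in H by auto. simpl in H.
      assert (Hl : 0 < lb j) by lra.
      set (x := ln (1 + Ss j)). set (x' := ln (1 + Ss (j - 1)%nat)).
      assert (Hx : x <= 2 * lb j * tau0).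
      { unfold x. apply Rmult_le_reg_r with (/ (2 * lb j)). apply Rinv_0_lt_compat; lra.
        replace (2 * lb j * tau0 * / (2 * lb j)) with tau0 by (field; lra). auto. }
      unfold term. rewrite pow2m_exp by auto.
      assert (Hexp : exp (-2 * lb j * INR m) <= exp (- ((1 + s) * x)) * E).
      { unfold E. rewrite <- exp_plus. apply exp_le_exp. nra. }
      assert (Hw : (mu_phi N mu phi j)^2 = exp x - exp x').
      { unfold x, x'. rewrite !exp_ln. 2,3: pose proof (Ss_nonneg j); pose proof (Ss_nonneg (j - 1)); lra.
        replace j with (S (j - 1)) at 2 by lia. rewrite Ss_S. replace (S (j - 1)) with j by lia. unfold w. ring. }
      assert (Hxx : x' <= x).
      { unfold x, x'. pose proof (Ss_mono (j - 1) j ltac:(lia)). pose proof (Ss_nonneg (j-1)).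
        apply ln_le; lra. }
      pose proof (PT x' x s Hs Hxx).
      rewrite Hw. assert (0 <= exp x - exp x').
      { pose proof (exp_le_exp _ _ Hxx). lra. }
      apply Rle_trans with ((exp x - exp x') * (exp (- ((1 + s) * x)) * E)).
      apply Rmult_le_compat_l; auto.
      replace (g (j - 1)%nat - g j) with ((exp (- (s * x')) - exp (- (s * x))) / s) by (unfold g, x, x'; field; lra).
      rewrite <- Rmult_assoc. apply Rmult_le_compat_r; lra. }
apply Rle_trans with (rsum (N - J) (fun i => (g (J - 1 + i)%nat - g (J - 1 + S i)%nat) * E)).
- apply rsum_le. intros i Hi. replace (J - 1 + S i)%nat with (J + i)%nat by lia.
  replace (J - 1 + i)%nat with (J + i - 1)%nat by lia. auto.
- rewrite rsum_scal_r. rewrite (rsum_telescope (N - J) (fun i => g (J - 1 + i)%nat)).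
  pose proof (Hg (J - 1 + 0)%nat). pose proof (Hg (J - 1 + (N - J))%nat).
  replace (exp (-2 * lb J * h) / s) with (1 / s * E) by (unfold E; field; lra). nra.
Qed.

Lemma tau_attain tau0 : tau N mu beta phi c = Fin tau0 -> 0 < tau0 ->
  exists j, (J <= j < N)%nat /\ beta j <> 0 /\ 0 < lb j /\ ln (1 + Ss j) = 2 * lb j * tau0.
Proof.
intros Ht Ht0. destruct J_spec as (A & B & C). rewrite tau_unfold in Ht.
destruct (ER_bigmax_attain_fin _ _ _ Ht Ht0) as (k & Hk & Hf). fold J in Hk, Hf.
exists (J + k)%nat. split. lia.
destruct (Req_dec (beta (J + k)%nat) 0) as [e|e].
- rewrite tt_zero in Hf by auto. assert (0 = tau0) by congruence. lra.
- pose proof (lb_nonneg (J + k) ltac:(lia) e).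
  destruct (Req_dec (lb (J + k)%nat) 0) as [e2|e2].
  + rewrite tt_inf in Hf by auto. discriminate.
  + rewrite tt_fin in Hf by auto. assert (Hf' : ln (1 + Ss (J + k)%nat) / (2 * lb (J + k)%nat) = tau0) by congruence.
    split; auto. split. lra. rewrite <- Hf'. field. lra.
Qed.

Lemma tau_pos_betaJ tau0 : tau N mu beta phi c = Fin tau0 -> 0 < tau0 -> beta J <> 0.
Proof.
intros Ht Ht0. destruct J_spec as (A & B & C). destruct (tau_attain tau0 Ht Ht0) as (j & Hj & Hn & _).
intros e. pose proof (Hmon J j ltac:(lia) ltac:(lia) ltac:(lia)). rewrite e, Rabs_R0 in H.
pose proof (Rabs_pos_lt _ Hn). lra.
Qed.

Lemma upper_bound tau0 s h m : tau N mu beta phi c = Fin tau0 -> 0 < tau0 ->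
  0 < s -> 0 <= h -> (1 + s) * tau0 + h <= INR m ->
  D m <= c + exp (-2 * lb J * h) / s.
Proof.
intros Ht Ht0 Hs Hh Hm. destruct J_spec as (A & B & C).
pose proof (tau_pos_betaJ tau0 Ht Ht0) as HbJ.
rewrite (D_split m J) by lia. pose proof (first_le m (J - 1) ltac:(lia)).
pose proof (tail_bound tau0 s h m Ht Ht0 HbJ Hs Hh Hm). lra.
Qed.

Lemma lower_bound tau0 h m : tau N mu beta phi c = Fin tau0 -> 0 < tau0 -> 0 <= h ->
  INR m + h <= tau0 -> c / (1 + c) * exp (2 * lb J * h) <= D m.
Proof.
intros Ht Ht0 Hh Hm. destruct J_spec as (A & B & C).
destruct (tau_attain tau0 Ht Ht0) as (j & Hj & Hn & Hl & Hx).
pose proof (D_lower m j ltac:(lia)). rewrite pow2m_exp in H by auto.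
pose proof (lb_mono J j ltac:(lia) ltac:(lia) ltac:(lia) Hn).
pose proof (lb_nonneg J ltac:(lia) (tau_pos_betaJ tau0 Ht Ht0)).
pose proof (Ss_mono J j ltac:(lia)).
assert (E1 : exp (-2 * lb j * INR m) >= exp (2 * lb j * h) / (1 + Ss j)).
{ replace (exp (2 * lb j * h) / (1 + Ss j)) with (exp (2 * lb j * h - ln (1 + Ss j))).
  2:{ unfold Rminus. rewrite exp_plus, exp_Ropp, exp_ln by lra. field. lra. }
  apply Rle_ge, exp_le_exp. rewrite Hx. nra. }
assert (E2 : exp (2 * lb J * h) <= exp (2 * lb j * h)) by (apply exp_le_exp; nra).
assert (E3 : c / (1 + c) <= Ss j / (1 + Ss j)).
{ apply Rmult_le_reg_r with ((1 + c) * (1 + Ss j)). nra. field_simplify; nra. }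
pose proof (exp_pos (2 * lb J * h)).
apply Rle_trans with (Ss j / (1 + Ss j) * exp (2 * lb j * h)).
- apply Rmult_le_compat; try lra. apply Rlt_le, Rdiv_lt_0_compat; lra.
- apply Rle_trans with (Ss j * exp (-2 * lb j * INR m)); auto.
  replace (Ss j / (1 + Ss j) * exp (2 * lb j * h)) with (Ss j * (exp (2 * lb j * h) / (1 + Ss j))) by (field; lra).
  apply Rmult_le_compat_l; lra.
Qed.

Lemma two_tau_bound tau0 m : tau N mu beta phi c = Fin tau0 -> (1 <= m)%nat -> 2 * tau0 <= INR m ->
  D m <= c + 1.
Proof.
intros Ht Hm1 Hm. pose proof (ER_bigmax_ge0 (N - J) (fun k => tau_term N mu beta phi (J + k))).
assert (Ht' := Ht). rewrite tau_unfold in Ht'. fold J in Ht'. rewrite Ht' in H. simpl in H.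
destruct (Req_dec tau0 0) as [e|e].
- subst. apply tau_fin_zero in Ht. pose proof (beta0_D_le Ht m Hm1). lra.
- pose proof (upper_bound tau0 1 0 m Ht ltac:(lra) ltac:(lra) ltac:(lra) ltac:(lra)).
  rewrite Rmult_0_r, exp_0 in H0. lra.
Qed.

Lemma D_ge_expJ m : beta J <> 0 -> c * exp (-2 * lb J * INR m) <= D m.
Proof.
intros Hn. destruct J_spec as (A & B & C). pose proof (D_lower m J ltac:(lia)).
rewrite pow2m_exp in H by auto. pose proof (exp_pos (-2 * lb J * INR m)). nra.
Qed.

End WithC.

Lemma tau_anti c c' : 0 < c -> c <= c' -> c' < Ss (N - 1) ->
  ER_le (tau N mu beta phi c') (tau N mu beta phi c).
Proof.
intros H1 H2 H3. pose proof (jn_mono c c' ltac:(lra) H2 H3).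
destruct (jn_spec c' ltac:(lra) H3) as (A & _).
rewrite (tau_unfold c'). apply ER_bigmax_le.
- rewrite tau_unfold. apply ER_bigmax_ge0.
- intros k Hk. apply tt_le. lia.
Qed.

Lemma D_split3 m J1 J2 : (1 <= J1)%nat -> (J1 <= J2 <= N)%nat ->
  D m = rsum (J1 - 1) (fun i => term m (S i)) + rsum (J2 - J1) (fun i => term m (J1 + i)%nat)
        + rsum (N - J2) (fun i => term m (J2 + i)%nat).
Proof.
intros H1 H2. rewrite (D_split m J1) by lia. rewrite (rsum_split (J2 - J1) (N - J1)) by lia.
replace (N - J1 - (J2 - J1))%nat with (N - J2)%nat by lia.
rewrite (rsum_ext (N - J2) (fun i => term m (J1 + (J2 - J1 + i))%nat) (fun i => term m (J2 + i)%nat)).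
ring. intros; f_equal; lia.
Qed.

Lemma tail_shift m k J0 : (1 <= J0)%nat ->
  rsum (N - J0) (fun i => term (m + k) (J0 + i)%nat) <= beta J0 ^ (2 * k) * rsum (N - J0) (fun i => term m (J0 + i)%nat).
Proof.
intros H. rewrite <- rsum_scal_l. apply rsum_le. intros i Hi. unfold term.
replace (2 * (m + k))%nat with (2 * m + 2 * k)%nat by lia. rewrite pow_add.
pose proof (pow2m_le_abs (beta (J0 + i)%nat) (beta J0) k (Hmon J0 (J0 + i) H ltac:(lia) ltac:(lia))).
pose proof (pow2_ge_0 (mu_phi N mu phi (J0 + i))). pose proof (pow2m_nonneg (beta (J0 + i)%nat) m).
pose proof (pow2m_nonneg (beta (J0 + i)%nat) k).
replace (beta J0 ^ (2 * k) * (mu_phi N mu phi (J0 + i) ^ 2 * beta (J0 + i) ^ (2 * m)))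
  with ((mu_phi N mu phi (J0 + i) ^ 2 * beta (J0 + i) ^ (2 * m)) * beta J0 ^ (2 * k)) by ring.
rewrite <- Rmult_assoc. apply Rmult_le_compat_l; auto. apply Rmult_le_pos; auto.
Qed.

End Anal.

Lemma T2_fin N K pi mu eps : (exists m, L2dist N K pi mu m <= eps) ->
  exists k, T2 N K pi mu eps = Fin (INR k) /\ L2dist N K pi mu k <= eps /\
    forall m, L2dist N K pi mu m <= eps -> (k <= m)%nat.
Proof.
intros H. unfold T2. destruct (excluded_middle_informative _) as [e|e]; [|contradiction].
set (P := fun m => L2dist N K pi mu m <= eps /\ forall k, L2dist N K pi mu k <= eps -> (m <= k)%nat).
assert (HP : exists m, P m).
{ assert (U : has_unique_least_element le (fun m => L2dist N K pi mu m <= eps)).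
  { apply dec_inh_nat_subset_has_unique_least_element. intros n; apply classic. auto. }
  destruct U as (m & ((Hm1 & Hm2) & _)). exists m. split; auto. }
pose proof (epsilon_spec (inhabits 0%nat) P HP) as Hs.
exists (epsilon (inhabits 0%nat) P). split; auto.
Qed.

Lemma T2_inf N K pi mu eps : (forall m, eps < L2dist N K pi mu m) -> T2 N K pi mu eps = PInf.
Proof.
intros H. unfold T2. destruct (excluded_middle_informative _) as [e|e]; auto.
destruct e as [m Hm]. specialize (H m). lra.
Qed.

Lemma sqrt_le_iff x e : 0 <= x -> 0 < e -> (sqrt x <= e <-> x <= e ^ 2).
Proof.
intros Hx He. split; intros H.
- pose proof (sqrt_pos x). replace x with (sqrt x ^ 2) by (simpl; rewrite Rmult_1_r; apply sqrt_sqrt; auto). nra.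
- rewrite <- (sqrt_pow2 e) by lra. apply sqrt_le_1_alt. auto.
Qed.

Lemma ER_mul_fin x y : ER_mul (Fin x) (Fin y) = Fin (x * y).
Proof. reflexivity. Qed.

Lemma ER_mul_x0 a : ER_mul a (Fin 0) = Fin 0.
Proof. destruct a; simpl. f_equal; ring. destruct (Req_dec_T 0 0); auto. contradiction. Qed.

Lemma ER_mul_inf y : y <> 0 -> ER_mul PInf (Fin y) = PInf.
Proof. intros H. simpl. destruct (Req_dec_T y 0); auto. contradiction. Qed.

Lemma exp_neg_le x : 0 <= x -> exp (- x) <= 1 / (1 + x).
Proof.
intros H. rewrite exp_Ropp. pose proof (exp_ineq1_le x). pose proof (exp_pos x).
apply Rmult_le_reg_l with (exp x * (1 + x)). nra. field_simplify; try lra.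
Qed.

Lemma lam_fin beta j l : lam beta j = Fin l -> beta j <> 0 /\ l = lb beta j.
Proof.
unfold lam. destruct (Req_dec_T (beta j) 0). discriminate. intros H. split; auto. unfold lb. injection H. auto.
Qed.

Section Fam.
Variables (N : nat -> nat) (K : nat -> nat -> nat -> R) (pi mu : nat -> nat -> R)
  (beta : nat -> nat -> R) (phi : nat -> nat -> nat -> R).
Hypothesis HC : forall n, irred_rev_chain (N n) (K n) (pi n) (mu n).
Hypothesis HS : forall n, spectral_decomp (N n) (K n) (pi n) (beta n) (phi n).
Hypothesis HD : cv_infty (fun n => pi_norm2_muK (N n) (K n) (pi n) (mu n)).

Local Notation Dn n m := (Dm (N n) (mu n) (beta n) (phi n) m).
Local Notation Ssn n j := (Ssum (N n) (mu n) (phi n) j).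
Local Notation Jn n c := (jn (N n) (mu n) (phi n) c).
Local Notation lbn n j := (lb (beta n) j).
Local Notation lamj n c := (lam (beta n) (jn (N n) (mu n) (phi n) c)).
Local Notation ta n c := (tau (N n) (mu n) (beta n) (phi n) c).
Local Notation Tn n eps := (T2 (N n) (K n) (pi n) (mu n) eps).
Local Notation dn n m := (L2dist (N n) (K n) (pi n) (mu n) m).

Lemma Hbn n : forall j, (1 <= j < N n)%nat -> Rabs (beta n j) <= 1.
Proof. intros j Hj. apply (beta_le1 (N n) (K n) (pi n) (mu n) (beta n) (phi n)); auto. lia. Qed.

Lemma Hmonn n : forall i j, (1 <= i)%nat -> (i <= j)%nat -> (j < N n)%nat -> Rabs (beta n j) <= Rabs (beta n i).
Proof. intros i j H1 H2 H3. destruct (HS n) as (_ & _ & _ & _ & H). apply H; auto. Qed.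

Ltac inst L n := first
  [ pose proof (L (N n) (mu n) (beta n) (phi n) (Hbn n) (Hmonn n))
  | pose proof (L (N n) (mu n) (beta n) (phi n) (Hbn n))
  | pose proof (L (N n) (mu n) (beta n) (phi n) (Hmonn n))
  | pose proof (L (N n) (mu n) (beta n) (phi n))
  | pose proof (L (N n) (beta n) (Hbn n) (Hmonn n))
  | pose proof (L (N n) (beta n) (Hbn n))
  | pose proof (L (N n) (beta n) (Hmonn n))
  | pose proof (L (N n) (mu n) (phi n)) ].

Ltac instn L n X := first
  [ pose proof (L (N n) (mu n) (beta n) (phi n) (Hbn n) (Hmonn n)) as X
  | pose proof (L (N n) (mu n) (beta n) (phi n) (Hbn n)) as X
  | pose proof (L (N n) (mu n) (beta n) (phi n) (Hmonn n)) as X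
  | pose proof (L (N n) (mu n) (beta n) (phi n)) as X
  | pose proof (L (N n) (beta n) (Hbn n) (Hmonn n)) as X
  | pose proof (L (N n) (beta n) (Hbn n)) as X
  | pose proof (L (N n) (beta n) (Hmonn n)) as X
  | pose proof (L (N n) (mu n) (phi n)) as X ].

Lemma dn_eq n m : dn n m = sqrt (Dn n m).
Proof. apply (L2dist_eq (N n) (K n) (pi n) (mu n) (beta n) (phi n)); auto. Qed.

Lemma ev_D1 M : ev (fun n => M < Dn n 1).
Proof.
destruct (HD (M + 1)) as [N0 H]. exists N0. intros n Hn. specialize (H n Hn). simpl in H.
rewrite (pinorm_eq (N n) (K n) (pi n) (mu n) (beta n) (phi n)) in H; auto. lra.
Qed.

Lemma ev_D0 M : ev (fun n => M < Dn n 0).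
Proof.
apply (ev_mono _ _ (ev_D1 M)). intros n H. inst D_mono n. specialize (H0 0%nat). lra.
Qed.

Lemma ev_Ss c : ev (fun n => c < Ssn n (N n - 1)).
Proof.
apply (ev_mono _ _ (ev_D1 c)). intros n H. inst first_le n. specialize (H0 1%nat (N n - 1)%nat ltac:(lia)).
inst D_def n. rewrite H1 in H. lra.
Qed.

Lemma cut_up (f : nat -> nat) : Un_cv (fun n => dn n (f n)) 0 -> forall eta, 0 < eta -> ev (fun n => Dn n (f n) < eta).
Proof.
intros H eta He. destruct (H (sqrt eta) (sqrt_lt_R0 _ He)) as [N0 HN]. exists N0. intros n Hn.
specialize (HN n Hn). unfold R_dist in HN. rewrite Rminus_0_r, dn_eq, Rabs_right in HN by (apply Rle_ge, sqrt_pos).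
inst D_nonneg n. specialize (H0 (f n)).
apply sqrt_lt_0_alt. auto.
Qed.

Lemma cut_up' (f : nat -> nat) : (forall eta, 0 < eta -> ev (fun n => Dn n (f n) < eta)) -> Un_cv (fun n => dn n (f n)) 0.
Proof.
intros H e He. destruct (H (e ^ 2) ltac:(apply pow_lt; auto)) as [N0 HN]. exists N0. intros n Hn.
specialize (HN n Hn). unfold R_dist. rewrite Rminus_0_r, dn_eq, Rabs_right by (apply Rle_ge, sqrt_pos).
rewrite <- (sqrt_pow2 e) by lra. apply sqrt_lt_1_alt. split; auto. inst D_nonneg n. auto.
Qed.

Lemma cut_low (f : nat -> nat) : cv_infty (fun n => dn n (f n)) -> forall M, ev (fun n => M < Dn n (f n)).
Proof.
intros H M. destruct (H (Rmax 1 M)) as [N0 HN]. exists N0. intros n Hn.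
specialize (HN n Hn). simpl in HN. rewrite dn_eq in HN.
pose proof (Rmax_l 1 M). pose proof (Rmax_r 1 M). inst D_nonneg n. specialize (H2 (f n)).
rewrite <- (sqrt_sqrt (Dn n (f n))) by auto. nra.
Qed.

Lemma cut_low' (f : nat -> nat) : (forall M, ev (fun n => M < Dn n (f n))) -> cv_infty (fun n => dn n (f n)).
Proof.
intros H M. destruct (H (Rmax 0 M ^ 2)) as [N0 HN]. exists N0. intros n Hn.
specialize (HN n Hn). rewrite dn_eq. pose proof (Rmax_l 0 M). pose proof (Rmax_r 0 M).
apply Rle_lt_trans with (Rmax 0 M); auto. rewrite <- (sqrt_pow2 (Rmax 0 M)) by auto.
apply sqrt_lt_1_alt. split; auto. apply pow2_ge_0.
Qed.


Lemma Tn_fin n eps : 0 < eps -> (exists m, Dn n m <= eps ^ 2) ->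
  exists k, Tn n eps = Fin (INR k) /\ Dn n k <= eps ^ 2 /\ forall m, Dn n m <= eps ^ 2 -> (k <= m)%nat.
Proof.
intros He [m Hm].
assert (Hiff : forall m, dn n m <= eps <-> Dn n m <= eps ^ 2).
{ intros m'. rewrite dn_eq. apply sqrt_le_iff; auto. inst D_nonneg n. auto. }
destruct (T2_fin (N n) (K n) (pi n) (mu n) eps) as (k & H1 & H2 & H3).
{ exists m. apply Hiff; auto. }
exists k. split; auto. split. apply Hiff; auto. intros m' Hm'. apply H3. apply Hiff; auto.
Qed.

Lemma Tn_inf n eps : 0 < eps -> (forall m, eps ^ 2 < Dn n m) -> Tn n eps = PInf.
Proof.
intros He H. apply T2_inf. intros m. rewrite dn_eq.
destruct (Rlt_le_dec eps (sqrt (Dn n m))); auto.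
apply sqrt_le_iff in r; auto. specialize (H m). lra. inst D_nonneg n. auto.
Qed.

Definition Gp c := ev (fun n => exists l tau0, lamj n c = Fin l /\ ta n c = Fin tau0 /\ 0 < l /\ 0 < tau0) /\
  forall M, ev (fun n => forall l tau0, lamj n c = Fin l -> ta n c = Fin tau0 -> M <= l * tau0).

Definition Ep c := ER_tends_infty (fun n => ta n c).

Lemma lamj_cases n c : 0 < c -> c < Ssn n (N n - 1) ->
  (beta n (Jn n c) = 0 /\ lamj n c = PInf) \/
  (beta n (Jn n c) <> 0 /\ lamj n c = Fin (lbn n (Jn n c)) /\ 0 <= lbn n (Jn n c)).
Proof.
intros Hc Hs. destruct (jn_spec (N n) (mu n) (phi n) c) as (A & B & C); try lra.
destruct (Req_dec (beta n (Jn n c)) 0) as [e|e].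
- left. split; auto. apply lam_zero; auto.
- right. split; auto. split. apply lam_nz; auto. inst lb_nonneg n. apply H; auto. lia.
Qed.

Lemma S1 t : L2_cutoff_time (fun n m => dn n m) t -> forall c, 0 < c ->
  ev (fun n => exists l tau0, lamj n c = Fin l /\ ta n c = Fin tau0 /\ 0 < l /\ 0 < tau0 /\ t n < 8 * tau0) /\
  (forall M, ev (fun n => forall l, lamj n c = Fin l -> M <= l * t n)).
Proof.
intros [Htpos Hcut] c Hc. destruct (Hcut (/2) ltac:(lra)) as [Hup Hlow].
set (fu := fun n => nat_ceil ((1 + /2) * t n)). set (fl := fun n => nat_floor ((1 - /2) * t n)).
pose proof (cut_up fu Hup) as U. pose proof (cut_low fl Hlow) as L.
assert (E0 : ev (fun n => c < Ssn n (N n - 1) /\ c + 1 < Dn n 1 /\ c + 1 < Dn n 0 /\ Dn n (fu n) < c /\ c + 1 < Dn n (fl n))).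
{ pose proof (ev_and _ _ (ev_Ss c) (ev_and _ _ (ev_D1 (c+1)) (ev_and _ _ (ev_D0 (c+1))
     (ev_and _ _ (U c Hc) (L (c + 1)))))) as X. exact X. }
assert (Hfu : forall n, c < Ssn n (N n - 1) /\ c + 1 < Dn n 1 /\ c + 1 < Dn n 0 /\ Dn n (fu n) < c /\ c + 1 < Dn n (fl n) ->
   2 / 3 < t n /\ INR (fu n) <= 3 * t n /\ (1 + /2) * t n <= INR (fu n)).
{ intros n (H1 & H2 & H3 & H4 & H5).
  pose proof (Htpos n). pose proof (nat_ceil_spec ((1 + /2) * t n) ltac:(lra)). fold (fu n) in H0.
  assert (2 <= fu n)%nat.
  { destruct (fu n) as [|[|k]] eqn:Ef; try lia; rewrite <- Ef in H4; rewrite Ef in H4; lra. }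
  apply le_INR in H6. simpl in H6. lra. }
split.
- apply (ev_mono _ _ E0). intros n HE. pose proof (Hfu n HE) as (Ht1 & Ht2 & Ht3).
  destruct HE as (H1 & H2 & H3 & H4 & H5).
  pose proof (Htpos n).
  destruct (jn_spec (N n) (mu n) (phi n) c) as (A & B & C); try lra.
  destruct (lamj_cases n c Hc H1) as [(Hz & _)|(Hnz & Hl & Hl0)].
  { inst beta0_D_le n. specialize (H0 c Hc H1 Hz 1%nat ltac:(lia)). lra. }
  destruct (ta n c) as [tau0|] eqn:Et.
  2:{ inst tau_inf_abs1 n. specialize (H0 c Hc H1 Et). inst abs1_D_ge n. specialize (H6 c Hc H1 H0 (fu n)). lra. }
  inst two_tau_bound n. specialize (H0 c Hc H1 tau0).
  assert (Htau : 1 / 2 < tau0).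
  { destruct (Rle_lt_dec tau0 (1/2)); auto. specialize (H0 1%nat Et ltac:(lia) ltac:(simpl; lra)). lra. }
  exists (lbn n (Jn n c)), tau0. split; auto. split; auto. split.
  { destruct (Req_dec (lbn n (Jn n c)) 0) as [e|e]; [|lra].
    pose proof (abs1_lb (beta n) _ Hnz e). inst abs1_D_ge n. specialize (H7 c Hc H1 H6 (fu n)). lra. }
  split. lra.
  pose proof (nat_floor_spec ((1 - /2) * t n) ltac:(lra)). fold (fl n) in H6.
  destruct (fl n) as [|k] eqn:Efl.
  + simpl in H6. lra.
  + destruct (Rle_lt_dec (2 * tau0) (INR (S k))).
    * specialize (H0 (S k) Et ltac:(lia) r). lra.
    * lra.
- intros M. assert (Hce : 0 < c * exp (-6 * M)) by (apply Rmult_lt_0_compat; auto; apply exp_pos).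
  apply (ev_mono _ _ (ev_and _ _ E0 (U _ Hce))). intros n (HE & HU) l Hl.
  pose proof (Hfu n HE) as (Ht1 & Ht2 & Ht3). destruct HE as (H1 & H2 & H3 & H4 & H5).
  destruct (lam_fin _ _ _ Hl) as (Hnz & Hle).
  inst D_ge_expJ n. specialize (H c Hc H1 (fu n) Hnz).
  inst lb_nonneg n. destruct (jn_spec (N n) (mu n) (phi n) c) as (A & B & C); try lra.
  specialize (H0 (Jn n c) ltac:(lia) Hnz).
  assert (exp (-2 * lbn n (Jn n c) * INR (fu n)) < exp (-6 * M)).
  { apply Rmult_lt_reg_l with c; auto. lra. }
  apply exp_lt_inv in H6. rewrite Hle. nra.
Qed.


Lemma S1_G t : L2_cutoff_time (fun n m => dn n m) t -> forall c, 0 < c -> Gp c.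
Proof.
intros Hcut c Hc. destruct (S1 t Hcut c Hc) as [A B]. split.
- apply (ev_mono _ _ A). intros n (l & tau0 & H1 & H2 & H3 & H4 & H5). exists l, tau0. auto.
- intros M. apply (ev_mono _ _ (ev_and _ _ A (B (8 * M)))).
  intros n ((l & tau0 & H1 & H2 & H3 & H4 & H5) & HB) l' tau' Hl' Ht'.
  rewrite H1 in Hl'. injection Hl' as <-. rewrite H2 in Ht'. injection Ht' as <-.
  specialize (HB l H1). nra.
Qed.

Lemma S1_T t : L2_cutoff_time (fun n m => dn n m) t -> forall eps c, 0 < eps -> 0 < c ->
  ER_tends_infty (fun n => ER_mul (Tn n eps) (lamj n c)).
Proof.
intros Hcut eps c He Hc M. destruct (S1 t Hcut c Hc) as [A B].
destruct Hcut as [Htpos Hc2]. destruct (Hc2 (/2) ltac:(lra)) as [_ Hlow].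
set (fl := fun n => nat_floor ((1 - /2) * t n)).
pose proof (cut_low fl Hlow (eps ^ 2)) as L.
apply (ev_mono _ _ (ev_and _ _ A (ev_and _ _ (B (2 * M)) L))).
intros n ((l & tau0 & H1 & H2 & H3 & H4 & H5) & HB & HL). specialize (HB l H1).
rewrite H1. pose proof (Htpos n).
destruct (Classical_Prop.classic (exists m, Dn n m <= eps ^ 2)) as [Hex|Hnex].
- destruct (Tn_fin n eps He Hex) as (k & Hk1 & Hk2 & Hk3). rewrite Hk1. simpl.
  assert (fl n < k)%nat.
  { destruct (Nat.lt_ge_cases (fl n) k); auto. inst D_antimono n. specialize (H6 k (fl n) H0). lra. }
  apply (le_INR (S (fl n)) k) in H0. rewrite S_INR in H0.
  pose proof (nat_floor_spec ((1 - /2) * t n) ltac:(lra)). fold (fl n) in H6. nra.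
- rewrite Tn_inf; auto. rewrite ER_mul_inf by lra. simpl; auto.
  intros m. destruct (Rlt_le_dec (eps ^ 2) (Dn n m)); auto. exfalso; apply Hnex; exists m; auto.
Qed.

Lemma S1_tau t : L2_cutoff_time (fun n m => dn n m) t -> forall ct c, 0 < ct -> 0 < c ->
  ER_tends_infty (fun n => ER_mul (ta n ct) (lamj n c)).
Proof.
intros Hcut ct c Hct Hc M. destruct (S1 t Hcut c Hc) as [A B]. destruct (S1 t Hcut ct Hct) as [A' _].
apply (ev_mono _ _ (ev_and _ _ A (ev_and _ _ (B (8 * M)) A'))).
intros n ((l & tau0 & H1 & H2 & H3 & H4 & H5) & HB & (l' & tau' & H1' & H2' & H3' & H4' & H5')).
specialize (HB l H1). rewrite H1, H2'. simpl. nra.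
Qed.

Lemma S1_E t : L2_cutoff_time (fun n m => dn n m) t -> (forall M, ev (fun n => M <= t n)) ->
  forall c, 0 < c -> Ep c.
Proof.
intros Hcut Ht c Hc M. destruct (S1 t Hcut c Hc) as [A B].
apply (ev_mono _ _ (ev_and _ _ A (Ht (8 * M)))).
intros n ((l & tau0 & H1 & H2 & H3 & H4 & H5) & HM). rewrite H2. simpl. lra.
Qed.

Lemma lb_abs1 b : Rabs b = 1 -> - ln (Rabs b) = 0.
Proof. intros H. rewrite H, ln_1. ring. Qed.

Lemma S2 eps : 0 < eps -> (forall c, 0 < c -> ER_tends_infty (fun n => ER_mul (Tn n eps) (lamj n c))) ->
  forall c, 0 < c -> c <= eps ^ 2 / 2 -> Gp c.
Proof.
intros He HT c Hc Hce. set (s := 2 / eps ^ 2).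
assert (Hs : 0 < s) by (unfold s; apply Rdiv_lt_0_compat; [lra| apply pow_lt; auto]).
assert (Hclaim : forall M, ev (fun n => exists l tau0 k, lamj n c = Fin l /\ ta n c = Fin tau0 /\ 0 < l /\ 0 < tau0 /\
   Tn n eps = Fin (INR k) /\ Rmax 1 M <= INR k * l /\ INR k < (1 + s) * tau0 + 1 /\ (2 <= k)%nat)).
{ intros M. pose proof (HT c Hc (Rmax 1 M)) as HTM.
  apply (ev_mono _ _ (ev_and _ _ (ev_Ss c) (ev_and _ _ (ev_D1 (eps ^ 2)) (ev_and _ _ (ev_D0 (eps ^ 2)) HTM)))).
  intros n (H1 & H2 & H3 & H4). pose proof (Rmax_l 1 M).
  assert (Heps2 : 0 < eps ^ 2) by (apply pow_lt; auto).
  destruct (lamj_cases n c Hc H1) as [(Hz & _)|(Hnz & Hl & Hl0)].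
  { instn beta0_D_le n X. specialize (X c Hc H1 Hz 1%nat ltac:(lia)). lra. }
  rewrite Hl in H4.
  destruct (Req_dec (lbn n (Jn n c)) 0) as [e|e].
  { rewrite e, ER_mul_x0 in H4. simpl in H4. lra. }
  destruct (ta n c) as [tau0|] eqn:Et.
  2:{ instn tau_inf_abs1 n X. specialize (X c Hc H1 Et). apply lb_abs1 in X. contradiction. }
  instn tau_fin_nz n X. destruct (X c Hc H1 tau0 Et Hnz) as [_ Ht0].
  set (m := nat_ceil ((1 + s) * tau0)).
  pose proof (nat_ceil_spec ((1 + s) * tau0) ltac:(nra)) as Hceil. fold m in Hceil.
  instn upper_bound n Y. specialize (Y c Hc H1 tau0 s 0 m Et Ht0 Hs ltac:(lra) ltac:(lra)).
  rewrite Rmult_0_r, exp_0 in Y.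
  assert (Hm : Dn n m <= eps ^ 2). { unfold s in Y. replace (1 / (2 / eps ^ 2)) with (eps ^ 2 / 2) in Y by (field; lra). lra. }
  destruct (Tn_fin n eps He (ex_intro _ m Hm)) as (k & Hk1 & Hk2 & Hk3).
  exists (lbn n (Jn n c)), tau0, k. rewrite Hk1 in H4. simpl in H4.
  split; auto. split; auto. split. lra. split; auto. split; auto. split; auto. split.
  - specialize (Hk3 m Hm). apply le_INR in Hk3. lra.
  - destruct k as [|[|k]]; try lia; simpl in Hk2; lra. }
split.
- apply (ev_mono _ _ (Hclaim 1)). intros n (l & tau0 & k & H1 & H2 & H3 & H4 & _). exists l, tau0. auto.
- intros M. apply (ev_mono _ _ (Hclaim (2 * (1 + s) * M))).
  intros n (l & tau0 & k & H1 & H2 & H3 & H4 & H5 & H6 & H7 & H8) l' tau' Hl' Ht'.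
  rewrite H1 in Hl'. injection Hl' as <-. rewrite H2 in Ht'. injection Ht' as <-.
  pose proof (Rmax_r 1 (2 * (1 + s) * M)). apply le_INR in H8. simpl in H8.
  assert (INR k * l <= 2 * (1 + s) * tau0 * l) by nra.
  assert (2 * (1 + s) * M <= 2 * (1 + s) * (l * tau0)) by nra.
  apply Rmult_le_reg_l with (2 * (1 + s)); lra.
Qed.

Lemma S3 c ct : 0 < c -> c <= ct -> ER_tends_infty (fun n => ER_mul (ta n ct) (lamj n c)) -> Gp c.
Proof.
intros Hc Hct HT.
assert (Hclaim : forall M, ev (fun n => exists l tau0, lamj n c = Fin l /\ ta n c = Fin tau0 /\ 0 < l /\ 0 < tau0 /\
   Rmax 1 M <= l * tau0)).
{ intros M. pose proof (HT (Rmax 1 M)) as HTM.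
  apply (ev_mono _ _ (ev_and _ _ (ev_Ss ct) (ev_and _ _ (ev_D1 c) HTM))).
  intros n (H1 & H2 & H4). pose proof (Rmax_l 1 M).
  assert (H1' : c < Ssn n (N n - 1)) by lra.
  destruct (lamj_cases n c Hc H1') as [(Hz & _)|(Hnz & Hl & Hl0)].
  { instn beta0_D_le n X. specialize (X c Hc H1' Hz 1%nat ltac:(lia)). lra. }
  rewrite Hl in H4.
  destruct (Req_dec (lbn n (Jn n c)) 0) as [e|e].
  { rewrite e, ER_mul_x0 in H4. simpl in H4. lra. }
  destruct (ta n c) as [tau0|] eqn:Et.
  2:{ instn tau_inf_abs1 n X. specialize (X c Hc H1' Et). apply lb_abs1 in X. contradiction. }
  instn tau_anti n X. specialize (X c ct Hc Hct H1). rewrite Et in X.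
  destruct (ta n ct) as [tau'|]; [|simpl in X; contradiction]. simpl in X, H4.
  exists (lbn n (Jn n c)), tau0. split; auto. split; auto. split. lra.
  assert (0 < tau') by nra. split. lra. nra. }
split.
- apply (ev_mono _ _ (Hclaim 1)). intros n (l & tau0 & H1 & H2 & H3 & H4 & _). exists l, tau0. auto.
- intros M. apply (ev_mono _ _ (Hclaim M)).
  intros n (l & tau0 & H1 & H2 & H3 & H4 & H5) l' tau' Hl' Ht'.
  rewrite H1 in Hl'. injection Hl' as <-. rewrite H2 in Ht'. injection Ht' as <-.
  pose proof (Rmax_r 1 M). lra.
Qed.

Lemma S5 : (exists eps0, 0 < eps0 /\ ER_tends_infty (fun n => Tn n eps0)) \/
           (exists c, 0 < c /\ ER_tends_infty (fun n => ta n c)) ->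
  exists c2, 0 < c2 /\ forall c, 0 < c -> c <= c2 -> Ep c.
Proof.
intros [(eps & He & HT) | (c1 & Hc1 & HE)].
- assert (Heps2 : 0 < eps ^ 2) by (apply pow_lt; auto).
  exists (eps ^ 2 / 2). split. lra. intros c Hc Hce M.
  set (s := 2 / eps ^ 2).
  assert (Hs : 0 < s) by (unfold s; apply Rdiv_lt_0_compat; lra).
  apply (ev_mono _ _ (ev_and _ _ (ev_Ss c) (ev_and _ _ (ev_D1 (eps ^ 2)) (HT (Rmax 2 ((1 + s) * M + 1)))))).
  intros n (H1 & H2 & H4). pose proof (Rmax_l 2 ((1 + s) * M + 1)). pose proof (Rmax_r 2 ((1 + s) * M + 1)).
  destruct (ta n c) as [tau0|] eqn:Et; simpl; auto.
  destruct (Req_dec (beta n (Jn n c)) 0) as [Hz|Hnz].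
  { instn beta0_D_le n X. specialize (X c Hc H1 Hz 1%nat ltac:(lia)). lra. }
  instn tau_fin_nz n X. destruct (X c Hc H1 tau0 Et Hnz) as [_ Ht0].
  set (m := nat_ceil ((1 + s) * tau0)).
  pose proof (nat_ceil_spec ((1 + s) * tau0) ltac:(nra)) as Hceil. fold m in Hceil.
  instn upper_bound n Y. specialize (Y c Hc H1 tau0 s 0 m Et Ht0 Hs ltac:(lra) ltac:(lra)).
  rewrite Rmult_0_r, exp_0 in Y.
  assert (Hm : Dn n m <= eps ^ 2). { unfold s in Y. replace (1 / (2 / eps ^ 2)) with (eps ^ 2 / 2) in Y by (field; lra). lra. }
  destruct (Tn_fin n eps He (ex_intro _ m Hm)) as (k & Hk1 & Hk2 & Hk3).
  rewrite Hk1 in H4. simpl in H4. specialize (Hk3 m Hm). apply le_INR in Hk3. nra.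
- exists c1. split; auto. intros c Hc Hcc M.
  apply (ev_mono _ _ (ev_and _ _ (ev_Ss c1) (HE M))). intros n (H1 & H2).
  instn tau_anti n X. specialize (X c c1 Hc Hcc H1).
  destruct (ta n c1), (ta n c); simpl in *; auto; lra.
Qed.


Lemma ratio c' c0 : 0 < c' -> 0 < c0 -> Gp c' -> Gp c0 -> Ep c0 -> forall r, 0 < r ->
  ev (fun n => forall tau' tau0, ta n c' = Fin tau' -> ta n c0 = Fin tau0 -> tau' <= (1 + r) * tau0).
Proof.
intros Hc' Hc0 [G1' G2'] [G1 _] HE r Hr.
set (KK := (c0 + 3 / r + 1) * (1 + c') / c' * (1 + r) / r).
apply (ev_mono _ _ (ev_and _ _ G1' (ev_and _ _ (G2' KK) (ev_and _ _ G1 (ev_and _ _ (ev_Ss c0) (ev_and _ _ (ev_Ss c') (HE (6 / r)))))))).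
intros n ((l' & t' & Hl' & Ht' & Hl'0 & Ht'0) & HK & (l0 & t0 & Hl0 & Ht0 & Hl00 & Ht00) & HS0 & HS' & HE6) tau' tau0 Htau' Htau0.
rewrite Ht' in Htau'. injection Htau' as <-. rewrite Ht0 in Htau0. injection Htau0 as <-.
rewrite Ht0 in HE6. simpl in HE6. specialize (HK l' t' Hl' Ht').
destruct (Rle_lt_dec t' ((1 + r) * t0)) as [ok|bad]; auto. exfalso.
set (m := nat_ceil ((1 + r / 3) * t0)).
pose proof (nat_ceil_spec ((1 + r / 3) * t0) ltac:(nra)) as Hm. fold m in Hm.
assert (Hm2 : INR m <= (1 + r / 2) * t0).
{ assert (1 <= r / 6 * t0).
  { assert (r / 6 * (6 / r) = 1) by (field; lra). assert (r / 6 * (6 / r) <= r / 6 * t0) by (apply Rmult_le_compat_l; lra). lra. }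
  lra. }
instn upper_bound n U. specialize (U c0 Hc0 HS0 t0 (r / 3) 0 m Ht0 Ht00 ltac:(lra) ltac:(lra) ltac:(lra)).
rewrite Rmult_0_r, exp_0 in U. replace (1 / (r / 3)) with (3 / r) in U by (field; lra).
set (h := t' - INR m).
assert (Hh : t' * r / (2 * (1 + r)) <= h).
{ unfold h. assert ((1 + r / 2) * t0 <= (1 + r / 2) / (1 + r) * t') .
  { apply Rmult_le_reg_l with (1 + r). lra. field_simplify; try lra. nra. }
  assert ((1 + r / 2) / (1 + r) * t' = t' - t' * r / (2 * (1 + r))) by (field; lra). lra. }
assert (Hh0 : 0 <= h). { assert (0 <= t' * r / (2 * (1 + r))). { apply Rmult_le_pos. nra. apply Rlt_le, Rinv_0_lt_compat. lra. } lra. }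
instn lower_bound n L. specialize (L c' Hc' HS' t' h m Ht' Ht'0 Hh0 ltac:(unfold h; lra)).
destruct (lam_fin _ _ _ Hl') as (_ & Hlb). rewrite <- Hlb in L.
pose proof (exp_ineq1_le (2 * l' * h)).
assert (HK2 : (c0 + 3 / r + 1) * (1 + c') / c' <= 2 * l' * h).
{ assert (E1 : KK * (r / (1 + r)) = (c0 + 3 / r + 1) * (1 + c') / c') by (unfold KK; field; lra).
  assert (E2 : l' * t' * (r / (1 + r)) <= 2 * l' * h).
  { apply Rle_trans with (2 * l' * (t' * r / (2 * (1 + r)))). right; field; lra.
    apply Rmult_le_compat_l; lra. }
  assert (E3 : KK * (r / (1 + r)) <= l' * t' * (r / (1 + r))).
  { apply Rmult_le_compat_r; [apply Rlt_le, Rdiv_lt_0_compat; lra | lra]. }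
  lra. }
assert (c' / (1 + c') * (1 + (c0 + 3 / r + 1) * (1 + c') / c') <= c' / (1 + c') * exp (2 * l' * h)).
{ apply Rmult_le_compat_l. apply Rlt_le, Rdiv_lt_0_compat; lra. lra. }
replace (c' / (1 + c') * (1 + (c0 + 3 / r + 1) * (1 + c') / c')) with (c' / (1 + c') + (c0 + 3 / r + 1)) in H0 by (field; lra).
assert (0 < c' / (1 + c')) by (apply Rdiv_lt_0_compat; lra). lra.
Qed.

Definition tsel (x : ER) : R := match x with Fin y => if Rlt_dec 0 y then y else 1 | PInf => 1 end.

Lemma S6 c0 : 0 < c0 -> (forall c', 0 < c' -> c' <= c0 -> Gp c') -> Ep c0 ->
  exists t, L2_cutoff_time (fun n m => dn n m) t /\ ev (fun n => ta n c0 = Fin (t n)).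
Proof.
intros Hc0 HG HE. exists (fun n => tsel (ta n c0)).
destruct (HG c0 Hc0 ltac:(lra)) as [G1 G2].
split; [split|].
- intros n. unfold tsel. destruct (ta n c0); [destruct (Rlt_dec 0 r)|]; lra.
- intros a Ha. split.
  + apply cut_up'. intros eta Heta.
    set (c' := Rmin c0 (eta / 2)).
    assert (Hc' : 0 < c') by (unfold c'; apply Rmin_pos; lra).
    assert (Hc'0 : c' <= c0) by (unfold c'; apply Rmin_l).
    assert (Hc'e : c' <= eta / 2) by (unfold c'; apply Rmin_r).
    destruct (HG c' Hc' Hc'0) as [G1' G2'].
    set (KK := 64 / (a ^ 2 * eta) + 1).
    assert (HKK0 : 1 <= KK) by (unfold KK; assert (0 < 64 / (a ^ 2 * eta)) by (apply Rdiv_lt_0_compat; [lra| apply Rmult_lt_0_compat; [apply pow_lt|]; lra]); lra).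
    assert (HKp : 0 < 64 / (a ^ 2 * eta)) by (apply Rdiv_lt_0_compat; [lra| apply Rmult_lt_0_compat; [apply pow_lt|]; lra]).
    pose proof (ratio c' c0 Hc' Hc0 (HG c' Hc' Hc'0) (HG c0 Hc0 ltac:(lra)) HE (a / 2) ltac:(lra)) as Hr.
    apply (ev_mono _ _ (ev_and _ _ G1 (ev_and _ _ G1' (ev_and _ _ (G2' KK) (ev_and _ _ (ev_Ss c') Hr))))).
    intros n ((l0 & t0 & Hl0 & Ht0 & Hl00 & Ht00) & (l' & t' & Hl' & Ht' & Hl'0 & Ht'0) & HK & HS' & HR).
    specialize (HK l' t' Hl' Ht'). specialize (HR t' t0 Ht' Ht0).
    unfold tsel. rewrite Ht0. destruct (Rlt_dec 0 t0) as [_|bad]; [|lra].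
    set (m := nat_ceil ((1 + a) * t0)).
    pose proof (nat_ceil_spec ((1 + a) * t0) ltac:(nra)) as Hm. fold m in Hm.
    instn upper_bound n U. specialize (U c' Hc' HS' t' (a / 8) (a * t' / 8) m Ht' Ht'0 ltac:(lra) ltac:(nra)).
    assert (Hmm : (1 + a / 8) * t' + a * t' / 8 <= INR m).
    { assert ((1 + a / 4) * t' <= (1 + a / 4) * ((1 + a / 2) * t0)) by (apply Rmult_le_compat_l; lra).
      assert (E : (1 + a) * t0 - (1 + a / 4) * ((1 + a / 2) * t0) = a * t0 * (2 - a) / 8) by field.
      assert (0 <= a * t0 * (2 - a)) by (apply Rmult_le_pos; [apply Rmult_le_pos|]; lra). lra. }
    specialize (U Hmm). destruct (lam_fin _ _ _ Hl') as (_ & Hlb). rewrite <- Hlb in U.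
    assert (Hx : 0 <= l' * t' * a / 4) by (pose proof (Rmult_lt_0_compat _ _ Hl'0 Ht'0); nra).
    pose proof (exp_neg_le (l' * t' * a / 4) Hx).
    replace (-2 * l' * (a * t' / 8)) with (- (l' * t' * a / 4)) in U by field.
    assert (1 / (1 + l' * t' * a / 4) <= 4 / (a * KK)).
    { assert (HKK : 1 <= KK) by (unfold KK; lra).
      assert (Hq : a * KK / 4 <= 1 + l' * t' * a / 4) by nra.
      assert (1 / (1 + l' * t' * a / 4) <= 1 / (a * KK / 4)).
      { unfold Rdiv; rewrite !Rmult_1_l. apply Rinv_le_contravar; nra. }
      replace (4 / (a * KK)) with (1 / (a * KK / 4)) by (field; nra). auto. }
    assert (4 / (a * KK) / (a / 8) < eta / 2).
    { replace (4 / (a * KK) / (a / 8)) with (32 / (a ^ 2 * KK)) by (field; repeat split; nra).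
      apply Rmult_lt_reg_r with (a ^ 2 * KK). apply Rmult_lt_0_compat; [apply pow_lt|]; lra.
      replace (32 / (a ^ 2 * KK) * (a ^ 2 * KK)) with 32 by (field; repeat split; try nra; apply pow_nonzero; lra).
      unfold KK. replace (eta / 2 * (a ^ 2 * (64 / (a ^ 2 * eta) + 1))) with (32 + eta / 2 * a ^ 2) by (field; repeat split; try lra; try (apply pow_nonzero; lra)).
      assert (0 < a ^ 2) by (apply pow_lt; lra). nra. }
    assert (exp (- (l' * t' * a / 4)) / (a / 8) <= 4 / (a * KK) / (a / 8)).
    { unfold Rdiv at 1 3. apply Rmult_le_compat_r. apply Rlt_le, Rinv_0_lt_compat; lra. lra. }
    lra.
  + apply cut_low'. intros M.
    set (KK := (Rabs M + 1) * (1 + c0) / (2 * a * c0)).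
    apply (ev_mono _ _ (ev_and _ _ G1 (ev_and _ _ (G2 KK) (ev_Ss c0)))).
    intros n ((l0 & t0 & Hl0 & Ht0 & Hl00 & Ht00) & HK & HS0). specialize (HK l0 t0 Hl0 Ht0).
    unfold tsel. rewrite Ht0. destruct (Rlt_dec 0 t0) as [_|bad]; [|lra].
    set (m := nat_floor ((1 - a) * t0)).
    pose proof (nat_floor_spec ((1 - a) * t0) ltac:(nra)) as Hm. fold m in Hm.
    instn lower_bound n L. specialize (L c0 Hc0 HS0 t0 (a * t0) m Ht0 Ht00 ltac:(nra) ltac:(lra)).
    destruct (lam_fin _ _ _ Hl0) as (_ & Hlb). rewrite <- Hlb in L.
    pose proof (exp_ineq1_le (2 * l0 * (a * t0))).
    assert (c0 / (1 + c0) * (1 + 2 * l0 * (a * t0)) <= c0 / (1 + c0) * exp (2 * l0 * (a * t0))).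
    { apply Rmult_le_compat_l; [apply Rlt_le, Rdiv_lt_0_compat|]; lra. }
    assert (Rabs M + 1 <= c0 / (1 + c0) * (2 * a * KK)).
    { unfold KK. right. field. lra. }
    assert (2 * a * KK <= 2 * l0 * (a * t0)) by nra.
    assert (c0 / (1 + c0) * (2 * a * KK) <= c0 / (1 + c0) * (1 + 2 * l0 * (a * t0))).
    { apply Rmult_le_compat_l; [apply Rlt_le, Rdiv_lt_0_compat|]; lra. }
    pose proof (Rle_abs M). lra.
- apply (ev_mono _ _ G1). intros n (l0 & t0 & Hl0 & Ht0 & Hl00 & Ht00). rewrite Ht0. unfold tsel.
  destruct (Rlt_dec 0 t0); [auto|lra].
Qed.


Lemma cut_exists t : L2_cutoff_time (fun n m => dn n m) t -> forall eps, 0 < eps ->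
  ev (fun n => exists m, Dn n m <= eps ^ 2).
Proof.
intros [_ Hc] eps He. destruct (Hc (/2) ltac:(lra)) as [Hup _].
apply (ev_mono _ _ (cut_up _ Hup (eps ^ 2) ltac:(apply pow_lt; auto))).
intros n H. eexists. left. exact H.
Qed.

Lemma mid_bound n c c' m : 0 < c' -> c' <= c -> c < Ssn n (N n - 1) -> beta n (Jn n c') <> 0 ->
  rsum (Jn n c - Jn n c') (fun i => term (N n) (mu n) (beta n) (phi n) m (Jn n c' + i)%nat)
  <= c * exp (-2 * lbn n (Jn n c') * INR m).
Proof.
intros Hc' Hcc Hs Hnz.
destruct (jn_spec (N n) (mu n) (phi n) c) as (A & B & C); try lra.
destruct (jn_spec (N n) (mu n) (phi n) c') as (A' & B' & C'); try lra.
instn jn_mono n JM. specialize (JM c' c ltac:(lra) Hcc Hs).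
instn seg_le n SG. specialize (SG m (Jn n c') (Jn n c - Jn n c')%nat ltac:(lia) ltac:(lia)).
replace (Jn n c' + (Jn n c - Jn n c') - 1)%nat with (Jn n c - 1)%nat in SG by lia.
rewrite (pow2m_exp (beta n)) in SG by auto.
instn Ss_mono n SM. specialize (SM (Jn n c' - 1)%nat (Jn n c - 1)%nat ltac:(lia)).
instn Ss_nonneg n SN. specialize (SN (Jn n c' - 1)%nat).
pose proof (exp_pos (-2 * lbn n (Jn n c') * INR m)).
apply Rle_trans with (1 := SG). apply Rmult_le_compat_r; lra.
Qed.

Lemma S7a : (forall c, 0 < c -> Gp c) ->
  (forall eps c, 0 < eps -> 0 < c -> ER_tends_infty (fun n => ER_mul (Tn n eps) (lamj n c))) ->
  (forall eps, 0 < eps -> ev (fun n => exists m, Dn n m <= eps ^ 2)) ->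
  forall eps delta c, 0 < eps -> 0 < delta -> 0 < c ->
  ev (fun n => exists k1 k2 l, Tn n eps = Fin (INR k1) /\ Tn n delta = Fin (INR k2) /\ lamj n c = Fin l /\ 0 < l /\
     INR k1 <= INR k2 + 1 + Rmax 0 (ln (3 * delta ^ 2 / eps ^ 2)) / (2 * l)).
Proof.
intros HG HT Hex eps delta c He Hd Hc.
assert (He2 : 0 < eps ^ 2) by (apply pow_lt; auto).
assert (Hd2 : 0 < delta ^ 2) by (apply pow_lt; auto).
set (c' := Rmin c (eps ^ 2 / 3)).
assert (Hc' : 0 < c') by (unfold c'; apply Rmin_pos; lra).
assert (Hc'c : c' <= c) by (unfold c'; apply Rmin_l).
assert (Hc'e : c' <= eps ^ 2 / 3) by (unfold c'; apply Rmin_r).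
set (L := Rmax 0 (ln (3 * delta ^ 2 / eps ^ 2))).
set (K2 := 3 * c / (2 * eps ^ 2) + 1).
destruct (HG c Hc) as [G1 _]. destruct (HG c' Hc') as [G1' _].
apply (ev_mono _ _ (ev_and _ _ G1 (ev_and _ _ G1' (ev_and _ _ (HT delta c' Hd Hc' K2)
   (ev_and _ _ (Hex delta Hd) (ev_and _ _ (Hex eps He) (ev_Ss c))))))).
intros n ((l & t0 & Hl & Ht & Hl0 & Ht0) & (l' & t' & Hl' & Ht' & Hl'0 & Ht'0) & HTd & Exd & Exe & HSs).
destruct (Tn_fin n delta Hd Exd) as (k2 & Hk2 & Dk2 & _).
destruct (Tn_fin n eps He Exe) as (k1 & Hk1 & _ & Mk1).
rewrite Hk2, Hl' in HTd. simpl in HTd.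
exists k1, k2, l. split; auto. split; auto. split; auto. split; auto.
destruct (lam_fin _ _ _ Hl) as (Hnz & Hlb). destruct (lam_fin _ _ _ Hl') as (Hnz' & Hlb').
destruct (jn_spec (N n) (mu n) (phi n) c) as (A & B & C); try lra.
destruct (jn_spec (N n) (mu n) (phi n) c') as (A' & B' & C'); try lra.
instn jn_mono n JM. specialize (JM c' c ltac:(lra) Hc'c HSs).
set (k := nat_ceil (L / (2 * l))).
assert (HL0 : 0 <= L) by (unfold L; apply Rmax_l).
pose proof (nat_ceil_spec (L / (2 * l)) ltac:(apply Rmult_le_pos; [lra| apply Rlt_le, Rinv_0_lt_compat; lra])) as Hk.
fold k in Hk.
assert (HDm : Dn n (k2 + k) <= eps ^ 2).
{ instn D_split3 n DS. rewrite (DS (k2 + k)%nat (Jn n c') (Jn n c) ltac:(lia) ltac:(lia)).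
  instn first_le n FL. specialize (FL (k2 + k)%nat (Jn n c' - 1)%nat ltac:(lia)).
  pose proof (mid_bound n c c' (k2 + k) Hc' Hc'c HSs Hnz') as MB.
  rewrite <- Hlb' in MB. rewrite plus_INR in MB.
  assert (MB2 : c * exp (-2 * l' * (INR k2 + INR k)) <= eps ^ 2 / 3).
  { pose proof (pos_INR k). pose proof (pos_INR k2).
    assert (exp (-2 * l' * (INR k2 + INR k)) <= exp (- (2 * l' * INR k2))) by (apply exp_le_exp; nra).
    pose proof (exp_neg_le (2 * l' * INR k2) ltac:(nra)).
    assert (1 / (1 + 2 * l' * INR k2) <= 1 / (2 * K2)).
    { unfold Rdiv; rewrite !Rmult_1_l. apply Rinv_le_contravar. unfold K2.
      assert (0 < 3 * c / (2 * eps ^ 2)) by (apply Rdiv_lt_0_compat; lra). lra.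
      rewrite (Rmult_comm (INR k2) l') in HTd. lra. }
    assert (c * (1 / (2 * K2)) <= eps ^ 2 / 3).
    { unfold K2. assert (0 < 3 * c / (2 * eps ^ 2)) by (apply Rdiv_lt_0_compat; lra).
      apply Rmult_le_reg_r with (2 * (3 * c / (2 * eps ^ 2) + 1)). lra.
      field_simplify; try lra; try nra. }
    pose proof (exp_pos (-2 * l' * (INR k2 + INR k))). nra. }
  instn tail_shift n TS. specialize (TS k2 k (Jn n c) ltac:(lia)).
  rewrite (pow2m_exp (beta n)) in TS by auto. rewrite <- Hlb in TS.
  assert (TD : rsum (N n - Jn n c) (fun i => term (N n) (mu n) (beta n) (phi n) k2 (Jn n c + i)%nat) <= delta ^ 2).
  { rewrite (DS k2 (Jn n c') (Jn n c) ltac:(lia) ltac:(lia)) in Dk2.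
    instn first_nonneg n F0. instn part_nonneg n P0. specialize (F0 k2 (Jn n c' - 1)%nat).
    specialize (P0 k2 (Jn n c - Jn n c')%nat (Jn n c')). lra. }
  assert (EX : exp (-2 * l * INR k) <= eps ^ 2 / (3 * delta ^ 2)).
  { apply Rle_trans with (exp (- ln (3 * delta ^ 2 / eps ^ 2))).
    - apply exp_le_exp. pose proof (Rmax_r 0 (ln (3 * delta ^ 2 / eps ^ 2))). fold L in H.
      assert (L <= 2 * l * INR k).
      { destruct Hk as [Hk _]. apply Rmult_le_compat_l with (r := 2 * l) in Hk; [|lra].
        replace (2 * l * (L / (2 * l))) with L in Hk by (field; lra). lra. }
      lra.
    - rewrite exp_Ropp, exp_ln. right. field. split; lra.
      apply Rdiv_lt_0_compat; lra. }
  instn part_nonneg n P1. specialize (P1 k2 (N n - Jn n c)%nat (Jn n c)).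
  assert (exp (-2 * l * INR k) * rsum (N n - Jn n c) (fun i => term (N n) (mu n) (beta n) (phi n) k2 (Jn n c + i)%nat)
     <= eps ^ 2 / (3 * delta ^ 2) * delta ^ 2).
  { apply Rmult_le_compat; auto. apply Rlt_le, exp_pos. }
  replace (eps ^ 2 / (3 * delta ^ 2) * delta ^ 2) with (eps ^ 2 / 3) in H by (field; lra).
  lra. }
specialize (Mk1 _ HDm). apply le_INR in Mk1. rewrite plus_INR in Mk1. lra.
Qed.

Lemma S7b : (forall c, 0 < c -> Gp c) ->
  (forall ct c, 0 < ct -> 0 < c -> ER_tends_infty (fun n => ER_mul (ta n ct) (lamj n c))) ->
  (forall eps, 0 < eps -> ev (fun n => exists m, Dn n m <= eps ^ 2)) ->
  forall eps c, 0 < eps -> 0 < c ->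
  ev (fun n => exists k t0 l, Tn n eps = Fin (INR k) /\ ta n c = Fin t0 /\ lamj n c = Fin l /\ 0 < l /\ 0 < t0 /\
     Rabs (INR k - t0) <= 2 * Rmax 1 (sqrt (t0 * / l))).
Proof.
intros HG HT Hex eps c He Hc.
assert (He2 : 0 < eps ^ 2) by (apply pow_lt; auto).
set (c' := Rmin c (eps ^ 2 / 3)).
assert (Hc' : 0 < c') by (unfold c'; apply Rmin_pos; lra).
assert (Hc'c : c' <= c) by (unfold c'; apply Rmin_l).
assert (Hc'e : c' <= eps ^ 2 / 3) by (unfold c'; apply Rmin_r).
set (Y1 := 24 / eps ^ 2). set (Y2 := eps ^ 2 * (1 + c) / (2 * c)).
assert (HY1 : 0 < Y1) by (unfold Y1; apply Rdiv_lt_0_compat; lra).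
assert (HY2 : 0 < Y2) by (unfold Y2; apply Rdiv_lt_0_compat; nra).
set (KK := Y1 ^ 2 + Y2 ^ 2 + 1).
set (K2 := 3 * c / (2 * eps ^ 2) + 1).
destruct (HG c Hc) as [G1 G2]. destruct (HG c' Hc') as [G1' _].
apply (ev_mono _ _ (ev_and _ _ G1 (ev_and _ _ (G2 KK) (ev_and _ _ G1' (ev_and _ _ (HT c c' Hc Hc' K2)
   (ev_and _ _ (Hex eps He) (ev_Ss c))))))).
intros n ((l & t0 & Hl & Ht & Hl0 & Ht0) & HK & (l' & t' & Hl' & Ht' & Hl'0 & Ht'0) & HTc & Exe & HSs).
specialize (HK l t0 Hl Ht).
destruct (Tn_fin n eps He Exe) as (k & Hk1 & Dk & Mk).
rewrite Ht, Hl' in HTc. simpl in HTc.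
exists k, t0, l. split; auto. split; auto. split; auto. split; auto. split; auto.
destruct (lam_fin _ _ _ Hl) as (Hnz & Hlb). destruct (lam_fin _ _ _ Hl') as (Hnz' & Hlb').
destruct (jn_spec (N n) (mu n) (phi n) c) as (A & B & C); try lra.
destruct (jn_spec (N n) (mu n) (phi n) c') as (A' & B' & C'); try lra.
instn jn_mono n JM. specialize (JM c' c ltac:(lra) Hc'c HSs).
set (x := sqrt (t0 * / l)). set (y := sqrt (l * t0)).
assert (Hx0 : 0 < x) by (unfold x; apply sqrt_lt_R0; apply Rmult_lt_0_compat; [lra| apply Rinv_0_lt_compat; lra]).
assert (Hy0 : 0 < y) by (unfold y; apply sqrt_lt_R0; nra).
assert (Hx2 : x * x = t0 * / l) by (unfold x; apply sqrt_sqrt; apply Rlt_le, Rmult_lt_0_compat; [lra| apply Rinv_0_lt_compat; lra]).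
assert (Hy2 : y * y = l * t0) by (unfold y; apply sqrt_sqrt; nra).
assert (Hxy : x * y = t0).
{ assert ((x * y) * (x * y) = t0 * t0). { replace ((x * y) * (x * y)) with ((x * x) * (y * y)) by ring. rewrite Hx2, Hy2. field. lra. }
  assert (0 < x * y) by nra. nra. }
assert (Hlx : l * x = y).
{ assert ((l * x) * (l * x) = y * y). { replace ((l * x) * (l * x)) with (l * l * (x * x)) by ring. rewrite Hx2, Hy2. field. lra. }
  assert (0 < l * x) by nra. nra. }
assert (HyY : Y1 <= y /\ Y2 <= y).
{ assert (Y1 * Y1 <= y * y) by (rewrite Hy2; simpl in KK; unfold KK in HK; simpl in HK; nra).
  assert (Y2 * Y2 <= y * y) by (rewrite Hy2; unfold KK in HK; simpl in HK; nra).
  split; nra. }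
set (m := nat_ceil (t0 + x)).
pose proof (nat_ceil_spec (t0 + x) ltac:(lra)) as Hm. fold m in Hm.
assert (HDm : Dn n m <= eps ^ 2).
{ instn D_split3 n DS. rewrite (DS m (Jn n c') (Jn n c) ltac:(lia) ltac:(lia)).
  instn first_le n FL. specialize (FL m (Jn n c' - 1)%nat ltac:(lia)).
  pose proof (mid_bound n c c' m Hc' Hc'c HSs Hnz') as MB. rewrite <- Hlb' in MB.
  assert (MB2 : c * exp (-2 * l' * INR m) <= eps ^ 2 / 3).
  { assert (exp (-2 * l' * INR m) <= exp (- (2 * l' * t0))) by (apply exp_le_exp; nra).
    pose proof (exp_neg_le (2 * l' * t0) ltac:(nra)).
    assert (1 / (1 + 2 * l' * t0) <= 1 / (2 * K2)).
    { unfold Rdiv; rewrite !Rmult_1_l. apply Rinv_le_contravar. unfold K2.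
      assert (0 < 3 * c / (2 * eps ^ 2)) by (apply Rdiv_lt_0_compat; lra). lra.
      rewrite (Rmult_comm t0 l') in HTc. lra. }
    assert (c * (1 / (2 * K2)) <= eps ^ 2 / 3).
    { unfold K2. assert (0 < 3 * c / (2 * eps ^ 2)) by (apply Rdiv_lt_0_compat; lra).
      apply Rmult_le_reg_r with (2 * (3 * c / (2 * eps ^ 2) + 1)). lra.
      field_simplify; try lra; try nra. }
    pose proof (exp_pos (-2 * l' * INR m)). nra. }
  instn tail_bound n TB.
  specialize (TB c Hc HSs t0 (x / (2 * t0)) (x / 2) m Ht Ht0 Hnz ltac:(apply Rdiv_lt_0_compat; lra) ltac:(lra)).
  assert (Hsm : (1 + x / (2 * t0)) * t0 + x / 2 <= INR m).
  { replace ((1 + x / (2 * t0)) * t0 + x / 2) with (t0 + x) by (field; lra). lra. }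
  specialize (TB Hsm). rewrite <- Hlb in TB.
  assert (TB2 : exp (-2 * l * (x / 2)) / (x / (2 * t0)) <= eps ^ 2 / 3).
  { replace (-2 * l * (x / 2)) with (- y) by (rewrite <- Hlx; field).
    replace (x / (2 * t0)) with (1 / (2 * y)) by (rewrite <- Hxy; field; lra).
    assert (Ey : (1 + y / 2) * (1 + y / 2) <= exp y).
    { replace y with (y / 2 + y / 2) at 3 by field. rewrite exp_plus.
      pose proof (exp_ineq1_le (y / 2)). apply Rmult_le_compat; lra. }
    rewrite exp_Ropp.
    assert (2 * y / exp y <= 8 / y).
    { pose proof (exp_pos y). apply Rmult_le_reg_r with (exp y * y). nra.
      field_simplify; try lra; try nra. }
    assert (8 / y <= eps ^ 2 / 3).
    { destruct HyY as [HY _].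
      assert (8 / y <= 8 / Y1) by (unfold Rdiv; apply Rmult_le_compat_l; [lra| apply Rinv_le_contravar; lra]).
      assert (8 / Y1 = eps ^ 2 / 3) by (unfold Y1; field; lra). lra. }
    replace (/ exp y / (1 / (2 * y))) with (2 * y / exp y) by (field; split; [lra| apply Rgt_not_eq, exp_pos]).
    lra. }
  lra. }
pose proof (Mk m HDm) as Hkm. apply le_INR in Hkm.
assert (Hlow : t0 - x < INR k).
{ destruct (Rlt_le_dec (t0 - x) (INR k)) as [ok|bad]; auto. exfalso.
  instn lower_bound n LB. specialize (LB c Hc HSs t0 x k Ht Ht0 ltac:(lra) ltac:(lra)).
  rewrite <- Hlb in LB. replace (2 * l * x) with (2 * y) in LB by (rewrite <- Hlx; ring).
  pose proof (exp_ineq1_le (2 * y)).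
  assert (c / (1 + c) * (1 + 2 * y) <= c / (1 + c) * exp (2 * y)).
  { apply Rmult_le_compat_l; [apply Rlt_le, Rdiv_lt_0_compat|]; lra. }
  assert (eps ^ 2 < c / (1 + c) * (1 + 2 * y)).
  { destruct HyY as [_ HY]. unfold Y2 in HY.
    assert (eps ^ 2 = c / (1 + c) * (2 * (eps ^ 2 * (1 + c) / (2 * c)))) by (field; lra).
    assert (c / (1 + c) * (2 * (eps ^ 2 * (1 + c) / (2 * c))) < c / (1 + c) * (1 + 2 * y)).
    { apply Rmult_lt_compat_l; [apply Rdiv_lt_0_compat|]; lra. }
    lra. }
  lra. }
assert (Rabs (INR k - t0) <= x + 1) by (apply Rabs_le; lra).
pose proof (Rmax_l 1 x). pose proof (Rmax_r 1 x). fold x. lra.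
Qed.


Hypothesis H2 : (exists eps0, 0 < eps0 /\ ER_tends_infty (fun n => Tn n eps0)) \/
   (exists c, 0 < c /\ ER_tends_infty (fun n => ta n c)).

Lemma keyA : has_L2_cutoff (fun n m => dn n m) ->
  (forall c, 0 < c -> Gp c) /\ (forall c, 0 < c -> Ep c) /\
  (forall eps c, 0 < eps -> 0 < c -> ER_tends_infty (fun n => ER_mul (Tn n eps) (lamj n c))) /\
  (forall ct c, 0 < ct -> 0 < c -> ER_tends_infty (fun n => ER_mul (ta n ct) (lamj n c))) /\
  (forall eps, 0 < eps -> ev (fun n => exists m, Dn n m <= eps ^ 2)).
Proof.
intros [t Ht].
assert (HG : forall c, 0 < c -> Gp c) by (intros; eapply S1_G; eauto).
destruct S5 as (c2 & Hc2 & HE2); auto.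
destruct (S6 c2 Hc2 ltac:(intros; apply HG; lra) (HE2 c2 Hc2 ltac:(lra))) as (t' & Ht' & Hev).
assert (Ht'inf : forall M, ev (fun n => M <= t' n)).
{ intros M. apply (ev_mono _ _ (ev_and _ _ Hev (HE2 c2 Hc2 ltac:(lra) M))). intros n (A & B).
  rewrite A in B. simpl in B. auto. }
split; auto. split. { intros c Hc. eapply S1_E; eauto. }
split. { intros; eapply S1_T; eauto. }
split. { intros; eapply S1_tau; eauto. }
intros; eapply cut_exists; eauto.
Qed.

Lemma keyB : (exists cs, 0 < cs /\ forall c, 0 < c -> c <= cs -> Gp c) -> has_L2_cutoff (fun n m => dn n m).
Proof.
intros (cs & Hcs & HG). destruct S5 as (c2 & Hc2 & HE2); auto.
set (c0 := Rmin cs c2). assert (0 < c0) by (apply Rmin_pos; auto).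
assert (c0 <= cs) by apply Rmin_l. assert (c0 <= c2) by apply Rmin_r.
destruct (S6 c0 H ltac:(intros; apply HG; lra) (HE2 c0 H ltac:(lra))) as (t & Ht & _).
exists t; auto.
Qed.

Lemma main_sec :
  ((has_L2_cutoff (fun n m => dn n m) <->
      (forall eps c, 0 < eps -> 0 < c ->
         ER_tends_infty (fun n => ER_mul (Tn n eps) (lamj n c)))) /\
   (has_L2_cutoff (fun n m => dn n m) <->
      (exists eps, 0 < eps /\ forall c, 0 < c ->
         ER_tends_infty (fun n => ER_mul (Tn n eps) (lamj n c)))) /\
   (has_L2_cutoff (fun n m => dn n m) <->
      (forall c, 0 < c ->
         ER_tends_infty (fun n => ER_mul (ta n c) (lamj n c)))) /\
   (has_L2_cutoff (fun n m => dn n m) <->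
      (forall ct c, 0 < ct -> 0 < c ->
         ER_tends_infty (fun n => ER_mul (ta n ct) (lamj n c)))) /\
   (has_L2_cutoff (fun n m => dn n m) <->
      (exists ct, 0 < ct /\ forall c, 0 < c ->
         ER_tends_infty (fun n => ER_mul (ta n ct) (lamj n c))))) /\
  (has_L2_cutoff (fun n m => dn n m) ->
     (forall c, 0 < c ->
        exists t : nat -> R, L2_cutoff_time (fun n m => dn n m) t /\
          exists N0, forall n, (N0 <= n)%nat -> ta n c = Fin (t n)) /\
     (forall eps delta c, 0 < eps -> 0 < delta -> 0 < c ->
        exists C N0, forall n, (N0 <= n)%nat ->
          exists t1 t2, Tn n eps = Fin t1 /\ Tn n delta = Fin t2 /\
            Rabs (t1 - t2) <= C * Rmax 1 (ER_inv (lamj n c))) /\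
     (forall eps c, 0 < eps -> 0 < c ->
        exists C N0, forall n, (N0 <= n)%nat ->
          exists t s, Tn n eps = Fin t /\ ta n c = Fin s /\
            Rabs (t - s) <= C * Rmax 1 (sqrt (s * ER_inv (lamj n c))))).
Proof.
assert (B3 : forall eps, 0 < eps -> (forall c, 0 < c -> ER_tends_infty (fun n => ER_mul (Tn n eps) (lamj n c))) ->
   has_L2_cutoff (fun n m => dn n m)).
{ intros eps He H. apply keyB. exists (eps ^ 2 / 2). split. assert (0 < eps ^ 2) by (apply pow_lt; auto). lra.
  intros c Hc Hce. apply (S2 eps He H c Hc Hce). }
assert (B6 : forall ct, 0 < ct -> (forall c, 0 < c -> ER_tends_infty (fun n => ER_mul (ta n ct) (lamj n c))) ->
   has_L2_cutoff (fun n m => dn n m)).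
{ intros ct Hct H. apply keyB. exists ct. split; auto. intros c Hc Hcc. apply (S3 c ct Hc Hcc (H c Hc)). }
split.
- split; [split|split; [split|split; [split|split; [split|split]]]].
  + intros HC1. destruct (keyA HC1) as (_ & _ & A & _). auto.
  + intros H. apply (B3 1); [lra| intros c Hc; apply H; lra].
  + intros HC1. destruct (keyA HC1) as (_ & _ & A & _). exists 1. split; [lra|]. intros; apply A; lra.
  + intros (eps & He & H). eapply B3; eauto.
  + intros HC1. destruct (keyA HC1) as (_ & _ & _ & A & _). intros; apply A; lra.
  + intros H. apply keyB. exists 1. split; [lra|]. intros c Hc _. apply (S3 c c); auto; lra.
  + intros HC1. destruct (keyA HC1) as (_ & _ & _ & A & _). auto.
  + intros H. apply (B6 1); [lra|]. intros c Hc. apply H; lra.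
  + intros HC1. destruct (keyA HC1) as (_ & _ & _ & A & _). exists 1. split; [lra|]. intros; apply A; lra.
  + intros (ct & Hct & H). eapply B6; eauto.
- intros HC1. destruct (keyA HC1) as (AG & AE & AT & Atau & Aex).
  split; [|split].
  + intros c Hc. apply (S6 c Hc); [intros c' Hc' _; apply AG; exact Hc' | apply AE; exact Hc].
  + intros eps delta c He Hd Hc.
    set (L1 := Rmax 0 (ln (3 * delta ^ 2 / eps ^ 2))). set (L2 := Rmax 0 (ln (3 * eps ^ 2 / delta ^ 2))).
    assert (HL1 : 0 <= L1) by apply Rmax_l. assert (HL2 : 0 <= L2) by apply Rmax_l.
    exists (1 + (L1 + L2) / 2).
    destruct (ev_and _ _ (S7a AG AT Aex eps delta c He Hd Hc) (S7a AG AT Aex delta eps c Hd He Hc)) as [N0 HN].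
    exists N0. intros n Hn. destruct (HN n Hn) as ((k1 & k2 & l & E1 & E2 & El & Hl & I1) & (k2' & k1' & l' & E2' & E1' & El' & Hl' & I2)).
    exists (INR k1), (INR k2). split; auto. split; auto.
    rewrite E1 in E1'. injection E1' as E1'. rewrite E2 in E2'. injection E2' as E2'. rewrite El in El'. injection El' as <-.
    rewrite El. simpl. fold L1 in I1. fold L2 in I2. rewrite <- E1', <- E2' in I2.
    pose proof (Rmax_l 1 (/ l)). pose proof (Rmax_r 1 (/ l)).
    assert (L1 / (2 * l) = L1 / 2 * / l) by (field; lra). assert (L2 / (2 * l) = L2 / 2 * / l) by (field; lra).
    assert (L1 / 2 * / l <= L1 / 2 * Rmax 1 (/ l)) by (apply Rmult_le_compat_l; lra).
    assert (L2 / 2 * / l <= L2 / 2 * Rmax 1 (/ l)) by (apply Rmult_le_compat_l; lra).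
    apply Rabs_le. split; nra.
  + intros eps c He Hc. exists 2.
    destruct (S7b AG Atau Aex eps c He Hc) as [N0 HN]. exists N0. intros n Hn.
    destruct (HN n Hn) as (k & t0 & l & E1 & E2 & El & Hl & Ht & I).
    exists (INR k), t0. split; auto. split; auto. rewrite El. simpl. auto.
Qed.

End Fam.

Theorem theorem3p3
  (N : nat -> nat) (K : nat -> nat -> nat -> R) (pi mu : nat -> nat -> R)
  (beta : nat -> nat -> R) (phi : nat -> nat -> nat -> R) :
  (forall n, irred_rev_chain (N n) (K n) (pi n) (mu n)) ->
  (forall n, spectral_decomp (N n) (K n) (pi n) (beta n) (phi n)) ->
  let d := fun n m => L2dist (N n) (K n) (pi n) (mu n) m in
  let T := fun n eps => T2 (N n) (K n) (pi n) (mu n) eps in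
  let lamj := fun n c => lam (beta n) (jn (N n) (mu n) (phi n) c) in
  let ta := fun n c => tau (N n) (mu n) (beta n) (phi n) c in
  ((exists eps0, 0 < eps0 /\ ER_tends_infty (fun n => T n eps0)) \/
   (exists c, 0 < c /\ ER_tends_infty (fun n => ta n c))) ->
  cv_infty (fun n => pi_norm2_muK (N n) (K n) (pi n) (mu n)) ->
  (* equivalences (1) <-> (2), ..., (1) <-> (6) *)
  ((has_L2_cutoff d <->
      (forall eps c, 0 < eps -> 0 < c ->
         ER_tends_infty (fun n => ER_mul (T n eps) (lamj n c)))) /\
   (has_L2_cutoff d <->
      (exists eps, 0 < eps /\ forall c, 0 < c ->
         ER_tends_infty (fun n => ER_mul (T n eps) (lamj n c)))) /\
   (has_L2_cutoff d <->
      (forall c, 0 < c ->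
         ER_tends_infty (fun n => ER_mul (ta n c) (lamj n c)))) /\
   (has_L2_cutoff d <->
      (forall ct c, 0 < ct -> 0 < c ->
         ER_tends_infty (fun n => ER_mul (ta n ct) (lamj n c)))) /\
   (has_L2_cutoff d <->
      (exists ct, 0 < ct /\ forall c, 0 < c ->
         ER_tends_infty (fun n => ER_mul (ta n ct) (lamj n c))))) /\
  (* consequences of cutoff *)
  (has_L2_cutoff d ->
     (forall c, 0 < c ->
        exists t : nat -> R, L2_cutoff_time d t /\
          exists N0, forall n, (N0 <= n)%nat -> ta n c = Fin (t n)) /\
     (forall eps delta c, 0 < eps -> 0 < delta -> 0 < c ->
        exists C N0, forall n, (N0 <= n)%nat ->
          exists t1 t2, T n eps = Fin t1 /\ T n delta = Fin t2 /\
            Rabs (t1 - t2) <= C * Rmax 1 (ER_inv (lamj n c))) /\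
     (forall eps c, 0 < eps -> 0 < c ->
        exists C N0, forall n, (N0 <= n)%nat ->
          exists t s, T n eps = Fin t /\ ta n c = Fin s /\
            Rabs (t - s) <= C * Rmax 1 (sqrt (s * ER_inv (lamj n c))))).
Proof.
intros HC HS d T lamj ta H2 HD.
exact (main_sec N K pi mu beta phi HC HS HD H2).
Qed.
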